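(* Let $\varepsilon>0$. For a prime $q\leqslant x^{1-\varepsilon}$, real $z\leqslant 2x$, and any interval $I\subset[x,3x]$, \[ \frac1{\varphi(q)}\sum_{\chi\neq\chi_0}\left|\sum_{\substack{c^6\leqslant z\\ nc^6\in I}}\mu(c)\chi(n)\chi(c)^6f(n)\right|^2\ll_\varepsilon\Big(z^{\frac13}+|I|^{\frac16}q^{\frac56}\Big)\log^6x, \] where $|I|$ is the length of $I$.
   Context: Sums run over positive integers $n,c$; the outer sum is over non-principal Dirichlet characters $\chi$ modulo $q$ ($\chi_0$ the principal character). $\mu$ is the Möbius function and $\varphi$ Euler's totient function. $f(u):=\frac{\zeta(3/2)}{2u^{1/2}}+\frac{\zeta(2/3)}{3u^{2/3}}$ for $u>0$. *)

(* Defs.v *)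
From Stdlib Require Import Reals Lra List.
From Coquelicot Require Import Coquelicot.
From mathcomp Require ssrnat seq prime.
Open Scope R_scope.

(* Mobius function: mu n = (-1)^(number of prime factors) if n is squarefree, 0 otherwise
   (mu 1 = 1; value at 0 irrelevant, never used). *)
Definition mobius (n : nat) : R :=
  if (n =? 0)%nat then 0 else
  if forallb (fun p => (prime.logn p n =? 1)%nat) (prime.primes n)
  then (-1) ^ (length (prime.primes n)) else 0.

Definition phi (n : nat) : nat := prime.totient n.

(* real power t^s, with 0^s = 0 (for s > 0) and t^s = 0 for t <= 0 *)
Definition rpow (t s : R) : R := if Rlt_dec 0 t then Rpower t s else 0.

(* Riemann zeta on (0, +oo) \ {1} via the Dirichlet eta function:
   zeta s = (1 - 2^(1-s))^(-1) * sum_{n>=1} (-1)^(n-1) n^(-s).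
   For s > 1 this is the usual Dirichlet series; for 0 < s < 1 it is the
   value of the analytic continuation (e.g. zeta(2/3)). *)
Definition zeta (s : R) : R :=
  / (1 - Rpower 2 (1 - s)) *
  Series (fun n : nat => (-1) ^ n / Rpower (INR (S n)) s).

Definition f (u : R) : R :=
  zeta (3/2) / (2 * Rpower u (1/2)) + zeta (2/3) / (3 * Rpower u (2/3)).

Definition dirichlet_char (q : nat) (chi : nat -> C) : Prop :=
  chi 1%nat = RtoC 1 /\
  (forall m n : nat, chi (m * n)%nat = Cmult (chi m) (chi n)) /\
  (forall n : nat, chi (n + q)%nat = chi n) /\
  (forall n : nat, chi n = RtoC 0 <-> Nat.gcd n q <> 1%nat).

Definition principal_char (q : nat) (n : nat) : C :=
  if (Nat.gcd n q =? 1)%nat then RtoC 1 else RtoC 0.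

(* L lists every non-principal character mod q exactly once
   (distinctness is extensional: distinct entries differ at some n). *)
Definition enum_nonprincipal (q : nat) (L : list (nat -> C)) : Prop :=
  ForallOrdPairs (fun g h => exists n : nat, g n <> h n) L /\
  (forall chi, In chi L <-> (dirichlet_char q chi /\ ~ (forall n, chi n = principal_char q n))).

(* An interval I with endpoints a <= b; lc / rc say whether a / b belong to I.
   Its length |I| is b - a. *)
Definition in_interval (a b : R) (lc rc : bool) (t : R) : bool :=
  (if lc then if Rle_dec a t then true else false
         else if Rlt_dec a t then true else false) &&
  (if rc then if Rle_dec t b then true else false
         else if Rlt_dec t b then true else false).

(* Both indices run over 1..K; K is any bound
   with K >= 3x, which suffices because n c^6 in I subset [x,3x] forces
   n <= 3x and c <= c^6 <= 3x. *)
Definition inner_sum (K : nat) (z a b : R) (lc rc : bool) (chi : nat -> C) : C :=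
  sum_n (fun c : nat =>
    sum_n (fun n : nat =>
      if ((1 <=? c)%nat && (1 <=? n)%nat &&
          (if Rle_dec (INR c ^ 6) z then true else false) &&
          in_interval a b lc rc (INR n * INR c ^ 6))%bool
      then Cmult (Cmult (Cmult (RtoC (mobius c)) (chi n)) (pow_n (chi c) 6)) (RtoC (f (INR n)))
      else RtoC 0) K) K.

Definition char_sum (q : nat) (L : list (nat -> C)) (K : nat) (z a b : R) (lc rc : bool) : R :=
  / INR (phi q) *
  fold_right (fun chi acc => Cmod (inner_sum K z a b lc rc chi) ^ 2 + acc) 0 L.

(* Main.v *)
From Pilot Require Import Defs.
From Stdlib Require Import Reals List.
From Coquelicot Require Import Coquelicot.
From mathcomp Require ssrnat prime.
From Stdlib Require Import Lra Lia Permutation Arith Bool ZArith Classical.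
Open Scope R_scope.
Import Pilot.Defs.

Fixpoint rs (f : nat -> R) (N : nat) : R :=
  match N with O => 0 | S n => rs f n + f n end.

Lemma rs_ext f g N : (forall i, (i < N)%nat -> f i = g i) -> rs f N = rs g N.
Proof. induction N; intros H; simpl; auto. rewrite IHN, H; auto; intros; apply H; lia. Qed.

Lemma rs_le f g N : (forall i, (i < N)%nat -> f i <= g i) -> rs f N <= rs g N.
Proof. induction N; intros H; simpl. lra. assert (f N <= g N) by (apply H; lia).
 assert (rs f N <= rs g N) by (apply IHN; intros; apply H; lia). lra. Qed.

Lemma rs_nonneg f N : (forall i, (i < N)%nat -> 0 <= f i) -> 0 <= rs f N.
Proof. intros H. induction N; simpl. lra.
 assert (0 <= f N) by (apply H; lia). assert (0 <= rs f N) by (apply IHN; intros; apply H; lia). lra. Qed.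

Lemma rs_plus f g N : rs (fun i => f i + g i) N = rs f N + rs g N.
Proof. induction N; simpl. lra. rewrite IHN. lra. Qed.

Lemma rs_minus f g N : rs (fun i => f i - g i) N = rs f N - rs g N.
Proof. induction N; simpl. lra. rewrite IHN. lra. Qed.

Lemma rs_scal k f N : rs (fun i => k * f i) N = k * rs f N.
Proof. induction N; simpl. lra. rewrite IHN. lra. Qed.

Lemma rs_zero N : rs (fun _ => 0) N = 0.
Proof. induction N; simpl; auto. rewrite IHN; lra. Qed.

Lemma rs_const k N : rs (fun _ => k) N = INR N * k.
Proof. induction N. simpl. lra. cbn [rs]. rewrite IHN. rewrite S_INR. lra. Qed.

Lemma rs_abs f N : Rabs (rs f N) <= rs (fun i => Rabs (f i)) N.
Proof. induction N; simpl. rewrite Rabs_R0; lra.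
 eapply Rle_trans. apply Rabs_triang. lra. Qed.

Lemma rs_exchange (f : nat -> nat -> R) M N :
  rs (fun i => rs (fun j => f i j) N) M = rs (fun j => rs (fun i => f i j) M) N.
Proof. induction M; simpl. rewrite rs_zero; auto.
 rewrite IHM. rewrite <- rs_plus. auto. Qed.

Lemma rs_split N m f : (m <= N)%nat ->
  rs f N = rs f m + rs (fun i => f (i + m)%nat) (N - m).
Proof. intros H. induction N. replace m with 0%nat by lia. simpl; lra.
 destruct (Nat.eq_dec m (S N)). subst. rewrite Nat.sub_diag. simpl. lra.
 replace (S N - m)%nat with (S (N - m)) by lia. simpl. rewrite IHN by lia.
 replace (N - m + m)%nat with N by lia. lra. Qed.

Lemma rs_indic q (k : nat) (g : nat -> R) : (k < q)%nat ->
  rs (fun r => if (k =? r)%nat then g r else 0) q = g k.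
Proof. intros H. induction q. lia. simpl.
 destruct (Nat.eq_dec k q).
 - subst. rewrite Nat.eqb_refl.
   assert (E : rs (fun r => if (q =? r)%nat then g r else 0) q = rs (fun _ => 0) q).
   { apply rs_ext. intros i Hi. destruct (Nat.eqb_spec q i); auto; lia. }
   rewrite E, rs_zero. lra.
 - rewrite IHq by lia. destruct (Nat.eqb_spec k q). lia. lra. Qed.

Lemma rs_sq_le f N : rs (fun i => (f i)^2) N >= 0.
Proof. apply Rle_ge, rs_nonneg. intros; apply pow2_ge_0. Qed.

Fixpoint cs (f : nat -> C) (N : nat) : C :=
  match N with O => RtoC 0 | S n => Cplus (cs f n) (f n) end.

Lemma cs_ext f g N : (forall i, (i < N)%nat -> f i = g i) -> cs f N = cs g N.
Proof. induction N; intros H; simpl; auto. rewrite IHN, H; auto; intros; apply H; lia. Qed.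

Lemma cs_plus f g N : cs (fun i => Cplus (f i) (g i)) N = Cplus (cs f N) (cs g N).
Proof. induction N; simpl. apply injective_projections; simpl; lra.
 rewrite IHN. apply injective_projections; simpl; lra. Qed.

Lemma cs_zero N : cs (fun _ => RtoC 0) N = RtoC 0.
Proof. induction N; simpl; auto. rewrite IHN. apply injective_projections; simpl; lra. Qed.

Lemma cs_scal k f N : cs (fun i => Cmult k (f i)) N = Cmult k (cs f N).
Proof. induction N; simpl. apply injective_projections; simpl; lra.
 rewrite IHN. apply injective_projections; simpl; lra. Qed.

Lemma cs_exchange (f : nat -> nat -> C) M N :
  cs (fun i => cs (fun j => f i j) N) M = cs (fun j => cs (fun i => f i j) M) N.
Proof. induction M; simpl. rewrite cs_zero; auto.
 rewrite IHM. rewrite <- cs_plus. auto. Qed.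

Lemma cs_conj f N : Cconj (cs f N) = cs (fun i => Cconj (f i)) N.
Proof. induction N; simpl. apply injective_projections; simpl; lra.
 rewrite <- IHN. apply injective_projections; simpl; lra. Qed.

Lemma cs_re f N : fst (cs f N) = rs (fun i => fst (f i)) N.
Proof. induction N; simpl; auto. rewrite IHN; auto. Qed.

Lemma cs_RtoC f N : cs (fun i => RtoC (f i)) N = RtoC (rs f N).
Proof. induction N; simpl; auto. rewrite IHN. apply injective_projections; simpl; lra. Qed.

Lemma cs_indic q (k : nat) (g : nat -> C) : (k < q)%nat ->
  cs (fun r => if (k =? r)%nat then g r else RtoC 0) q = g k.
Proof. intros H. induction q. lia. simpl.
 destruct (Nat.eq_dec k q).
 - subst. rewrite Nat.eqb_refl.
   assert (E : cs (fun r => if (q =? r)%nat then g r else RtoC 0) q = cs (fun _ => RtoC 0) q).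
   { apply cs_ext. intros i Hi. destruct (Nat.eqb_spec q i); auto; lia. }
   rewrite E, cs_zero. apply injective_projections; simpl; lra.
 - rewrite IHq by lia. destruct (Nat.eqb_spec k q). lia. apply injective_projections; simpl; lra. Qed.

Lemma sum_n_cs (f : nat -> C) K : sum_n f K = cs f (S K).
Proof. induction K. rewrite sum_O. simpl. apply injective_projections; simpl; lra.
 rewrite sum_Sn, IHK. reflexivity. Qed.

Section Chars.
Variable q : nat.
Hypothesis Hq2 : (2 <= q)%nat.
Hypothesis Hqp : forall d, Nat.divide d q -> d = 1%nat \/ d = q.

Lemma coprime_iff n : Nat.gcd n q = 1%nat <-> ~ Nat.divide q n.
Proof. split.
- intros H D. assert (Nat.divide q (Nat.gcd n q)) by (apply Nat.gcd_greatest; auto; apply Nat.divide_refl).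
  rewrite H in H0. apply Nat.divide_1_r in H0. lia.
- intros H. destruct (Hqp (Nat.gcd n q)) as [E|E]; auto. apply Nat.gcd_divide_r.
  exfalso; apply H. rewrite <- E. apply Nat.gcd_divide_l. Qed.

Lemma euclid a b : Nat.divide q (a * b) -> Nat.divide q a \/ Nat.divide q b.
Proof. intros H. destruct (Hqp (Nat.gcd q a)) as [E|E]. apply Nat.gcd_divide_l.
 right. eapply Nat.gauss; eauto. left. rewrite <- E. apply Nat.gcd_divide_r. Qed.

Lemma divide_mod n : Nat.divide q n <-> (n mod q = 0)%nat.
Proof. rewrite Nat.Lcm0.mod_divide. tauto. Qed.

Lemma mod_eq_divide x y : (x <= y)%nat -> (x mod q = y mod q)%nat -> Nat.divide q (y - x).
Proof. intros Hxy E. exists (y / q - x / q)%nat.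
 rewrite Nat.mul_sub_distr_r. pose proof (Nat.div_mod_eq x q). pose proof (Nat.div_mod_eq y q).
 rewrite (Nat.mul_comm (y/q)), (Nat.mul_comm (x/q)). lia. Qed.

Lemma mul_inj a r1 r2 : ~ Nat.divide q a -> (r1 < q)%nat -> (r2 < q)%nat ->
  ((a * r1) mod q = (a * r2) mod q)%nat -> r1 = r2.
Proof. intros Ha H1 H2 E.
 assert (forall u v, (u <= v)%nat -> (v < q)%nat -> ((a * u) mod q = (a * v) mod q)%nat -> u = v).
 { intros u v Huv Hv Euv. apply mod_eq_divide in Euv; [|nia].
   rewrite <- Nat.mul_sub_distr_l in Euv. apply euclid in Euv. destruct Euv as [D|D]. contradiction.
   destruct (Nat.eq_dec (v - u) 0). lia. apply Nat.divide_pos_le in D; lia. }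
 destruct (Nat.le_ge_cases r1 r2). apply H; auto. symmetry; apply H; auto. Qed.

Definition csl (h : nat -> C) (l : list nat) : C := fold_right (fun r acc => Cplus (h r) acc) (RtoC 0) l.

Lemma csl_app h l1 l2 : csl h (l1 ++ l2) = Cplus (csl h l1) (csl h l2).
Proof. induction l1; simpl. apply injective_projections; simpl; lra.
 rewrite IHl1. apply injective_projections; simpl; lra. Qed.

Lemma cs_csl h N : cs h N = csl h (seq 0 N).
Proof. induction N; auto. rewrite seq_S, csl_app. simpl. rewrite IHN.
 apply injective_projections; simpl; lra. Qed.

Lemma csl_perm h l l' : Permutation l l' -> csl h l = csl h l'.
Proof. intros P; induction P; simpl; auto. rewrite IHP; auto.
 apply injective_projections; simpl; lra. congruence. Qed.

Lemma csl_map h s l : csl h (map s l) = csl (fun r => h (s r)) l.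
Proof. induction l; simpl; auto. rewrite IHl; auto. Qed.

Lemma perm_mul a : ~ Nat.divide q a -> Permutation (map (fun r => (a * r) mod q)%nat (seq 0 q)) (seq 0 q).
Proof. intros Ha. apply NoDup_Permutation_bis.
 - apply NoDup_map_NoDup_ForallPairs. intros x y Hx Hy E. apply in_seq in Hx. apply in_seq in Hy.
   eapply mul_inj; eauto; lia. apply seq_NoDup.
 - rewrite length_map; auto.
 - intros x Hx. apply in_map_iff in Hx. destruct Hx as [r [<- _]]. apply in_seq.
   split. lia. simpl. apply Nat.mod_upper_bound. lia. Qed.

Lemma cs_perm_mul a h : ~ Nat.divide q a -> cs (fun r => h ((a * r) mod q)%nat) q = cs h q.
Proof. intros Ha. rewrite !cs_csl. rewrite <- (csl_perm h _ _ (perm_mul a Ha)).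
 rewrite csl_map. auto. Qed.

Lemma mul_surj a t : ~ Nat.divide q a -> exists d, (d < q)%nat /\ ((d * a) mod q = t mod q)%nat.
Proof. intros Ha. assert (In (t mod q) (seq 0 q)). apply in_seq. split. lia. simpl. apply Nat.mod_upper_bound; lia.
 rewrite <- (Permutation_in' eq_refl (perm_mul a Ha)) in H. apply in_map_iff in H.
 destruct H as [d [E Hd]]. apply in_seq in Hd. exists d. split. lia. rewrite Nat.mul_comm; auto. Qed.

Lemma sum_mult_zero (g : nat -> C) a :
  (forall m n, g (m * n)%nat = Cmult (g m) (g n)) ->
  (forall n, g n = g (n mod q)%nat) ->
  ~ Nat.divide q a -> g a <> RtoC 1 -> cs g q = RtoC 0.
Proof. intros Hm Hp Ha Hg.
 assert (E : cs g q = Cmult (g a) (cs g q)).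
 { rewrite <- (cs_perm_mul a g Ha) at 1. rewrite <- cs_scal. apply cs_ext. intros i _.
   rewrite <- Hp. apply Hm. }
 assert (E2 : Cmult (Cminus (RtoC 1) (g a)) (cs g q) = RtoC 0).
 { transitivity (Cminus (cs g q) (Cmult (g a) (cs g q))). ring. rewrite <- E. ring. }
 assert (Cminus (RtoC 1) (g a) <> RtoC 0). intros E3. apply Hg.
 replace (g a) with (Cminus (RtoC 1) (Cminus (RtoC 1) (g a))) by ring. rewrite E3. ring.
 replace (cs g q) with (Cmult (Cinv (Cminus (RtoC 1) (g a))) (Cmult (Cminus (RtoC 1) (g a)) (cs g q))).
 rewrite E2. ring. rewrite Cmult_assoc, Cinv_l; auto. ring. Qed.

Section Dch.
Variable chi : nat -> C.
Hypothesis Hchi : dirichlet_char q chi.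

Lemma chi_one : chi 1%nat = RtoC 1. Proof. apply Hchi. Qed.
Lemma chi_mult m n : chi (m * n)%nat = Cmult (chi m) (chi n). Proof. apply Hchi. Qed.
Lemma chi_per_k n k : chi (n + k * q)%nat = chi n.
Proof. induction k. rewrite Nat.add_0_r; auto.
 replace (n + S k * q)%nat with (n + k * q + q)%nat by lia. destruct Hchi as [_ [_ [H _]]]. rewrite H; auto. Qed.
Lemma chi_mod n : chi n = chi (n mod q)%nat.
Proof. rewrite (Nat.div_mod_eq n q) at 1. rewrite Nat.add_comm, Nat.mul_comm. apply chi_per_k. Qed.
Lemma chi_zero_iff n : chi n = RtoC 0 <-> Nat.divide q n.
Proof. destruct Hchi as [_ [_ [_ H]]]. rewrite H. pose proof (coprime_iff n).
 pose proof (divide_mod n). destruct (Nat.eq_dec (n mod q) 0); tauto. Qed.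
Lemma chi_pow c k : chi (c ^ k)%nat = pow_n (chi c) k.
Proof. induction k; simpl. apply chi_one. rewrite chi_mult, IHk. reflexivity. Qed.

Lemma Cmod_chi_pow n k : Cmod (chi (n ^ k)%nat) = Cmod (chi n) ^ k.
Proof. induction k; simpl. rewrite chi_one. apply Cmod_1. rewrite chi_mult, Cmod_mult, IHk; auto. Qed.

Hypothesis Heul : forall n, ~ Nat.divide q n -> exists k, (n ^ (q - 1) = 1 + k * q)%nat.

Lemma Cmod_chi_1 n : ~ Nat.divide q n -> Cmod (chi n) = 1.
Proof. intros Hn. destruct (Heul n Hn) as [k Hk].
 assert (E : Cmod (chi n) ^ (q - 1) = 1).
 { rewrite <- Cmod_chi_pow, Hk, chi_per_k, chi_one. apply Cmod_1. }
 assert (0 <= Cmod (chi n)) by apply Cmod_ge_0.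
 destruct (Rtotal_order (Cmod (chi n)) 1) as [L|[L|L]]; auto.
 - assert (0 < q - 1)%nat by lia.
   pose proof (pow_lt_1_compat (Cmod (chi n)) (q-1) (conj H L) H0). lra.
 - assert (0 < q - 1)%nat by lia.
   pose proof (Rlt_pow_R1 (Cmod (chi n)) (q-1) L H0). lra. Qed.

Lemma chi_conj_1 n : ~ Nat.divide q n -> Cmult (chi n) (Cconj (chi n)) = RtoC 1.
Proof. intros Hn. rewrite <- Cmod2_conj, Cmod_chi_1 by auto. apply injective_projections; simpl; lra. Qed.

Lemma chi_zero : chi 0%nat = RtoC 0.
Proof. apply chi_zero_iff. apply Nat.divide_0_r. Qed.

End Dch.

Lemma Cconj_mult x y : Cconj (Cmult x y) = Cmult (Cconj x) (Cconj y).
Proof. apply injective_projections; simpl; ring. Qed.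

Definition ip (u v : nat -> C) : C := cs (fun r => Cmult (u r) (Cconj (v r))) q.

Hypothesis Heul : forall n, ~ Nat.divide q n -> exists k, (n ^ (q - 1) = 1 + k * q)%nat.

Lemma orth chi psi : dirichlet_char q chi -> dirichlet_char q psi ->
  (exists n, chi n <> psi n) -> ip chi psi = RtoC 0.
Proof. intros Hc Hp [n Hn]. unfold ip.
 assert (Hq : ~ Nat.divide q n).
 { intros D. apply Hn. rewrite (proj2 (chi_zero_iff chi Hc n) D), (proj2 (chi_zero_iff psi Hp n) D). auto. }
 apply (sum_mult_zero _ n).
 - intros a b. rewrite !chi_mult by auto. rewrite Cconj_mult. ring.
 - intros m. rewrite (chi_mod chi Hc m), (chi_mod psi Hp m) at 1. auto.
 - auto.
 - intros E. apply Hn. pose proof (chi_conj_1 psi Hp Heul n Hq).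
   transitivity (Cmult (Cmult (chi n) (Cconj (psi n))) (psi n)).
   replace (Cmult (Cmult (chi n) (Cconj (psi n))) (psi n)) with (Cmult (chi n) (Cmult (psi n) (Cconj (psi n)))) by ring.
   rewrite H. ring. rewrite E. ring. Qed.

Lemma self_ip chi : dirichlet_char q chi -> ip chi chi = RtoC (INR (q - 1)).
Proof. intros Hc. unfold ip.
 transitivity (cs (fun r => RtoC (if (r =? 0)%nat then 0 else 1)) q).
 - apply cs_ext. intros i Hi. destruct (Nat.eqb_spec i 0).
   + subst. rewrite (chi_zero chi Hc). apply injective_projections; simpl; ring.
   + apply chi_conj_1; auto. intros D. apply Nat.divide_pos_le in D; lia.
 - rewrite cs_RtoC. f_equal. destruct q as [|q']. lia. simpl.
   replace (q' - 0)%nat with q' by lia.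
   clear -q'. induction q'. simpl. lra. cbn [rs]. rewrite IHq'.
   destruct (Nat.eqb_spec (S q') 0). lia. rewrite S_INR. lra. Qed.

Lemma nonprinc_sum chi : dirichlet_char q chi -> ~ (forall n, chi n = principal_char q n) ->
  cs chi q = RtoC 0.
Proof. intros Hc Hn. destruct (Classical_Pred_Type.not_all_ex_not _ _ Hn) as [n E].
 unfold principal_char in E.
 assert (Hq : ~ Nat.divide q n).
 { intros D. apply E. rewrite (proj2 (chi_zero_iff chi Hc n) D).
   destruct (Nat.eqb_spec (Nat.gcd n q) 1). apply coprime_iff in e. contradiction. auto. }
 apply (sum_mult_zero _ n). apply chi_mult; auto. apply chi_mod; auto. auto.
 rewrite (proj2 (coprime_iff n) Hq) in E. simpl in E. auto. Qed.

Lemma cs_minus f g N : cs (fun i => Cminus (f i) (g i)) N = Cminus (cs f N) (cs g N).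
Proof. induction N; simpl. apply injective_projections; simpl; lra.
 rewrite IHN. apply injective_projections; simpl; lra. Qed.

Lemma ip_lin a v w lam : ip (fun r => Cminus (a r) (Cmult lam (v r))) w = Cminus (ip a w) (Cmult lam (ip v w)).
Proof. unfold ip. rewrite <- cs_scal, <- cs_minus. apply cs_ext; intros; ring. Qed.

Lemma ip_conj u v : ip v u = Cconj (ip u v).
Proof. unfold ip. rewrite cs_conj. apply cs_ext; intros. apply injective_projections; simpl; ring. Qed.

Lemma ip_quad a v lam : ip (fun r => Cminus (a r) (Cmult lam (v r))) (fun r => Cminus (a r) (Cmult lam (v r))) =
  Cplus (Cminus (Cminus (ip a a) (Cmult (Cconj lam) (ip a v))) (Cmult lam (ip v a))) (Cmult (Cmult lam (Cconj lam)) (ip v v)).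
Proof. unfold ip. rewrite <- !cs_scal, <- !cs_minus, <- cs_plus. apply cs_ext; intros.
 apply injective_projections; simpl; ring. Qed.

Lemma fold_ext_R (P Q : (nat -> C) -> R) L : List.Forall (fun g => P g = Q g) L ->
  fold_right (fun g acc => P g + acc) 0 L = fold_right (fun g acc => Q g + acc) 0 L.
Proof. induction 1; simpl; auto. rewrite H, IHForall; auto. Qed.

Lemma bessel (N : R) : 0 < N -> forall L, ForallOrdPairs (fun g h => ip g h = RtoC 0) L ->
  List.Forall (fun g => ip g g = RtoC N) L ->
  forall a, fold_right (fun g acc => Cmod (ip a g) ^ 2 + acc) 0 L <= N * fst (ip a a).
Proof. intros HN L. induction L as [|v L IH]; intros Ho Hn a; cbn [fold_right].
 - unfold ip. rewrite cs_re. apply Rmult_le_pos. lra. apply rs_nonneg. intros. simpl. nra.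
 - inversion Ho as [|v' L' Hv Ho']; subst. inversion Hn as [|v' L' Hvv Hn']; subst.
   set (s := ip a v). set (lam := Cmult s (RtoC (/ N))).
   set (a' := fun r => Cminus (a r) (Cmult lam (v r))).
   assert (E1 : fold_right (fun g acc => Cmod (ip a g) ^ 2 + acc) 0 L = fold_right (fun g acc => Cmod (ip a' g) ^ 2 + acc) 0 L).
   { apply fold_ext_R. eapply Forall_impl; [|exact Hv]. intros g Hg. simpl in Hg.
     unfold a'. rewrite ip_lin. rewrite Hg. f_equal. f_equal. apply injective_projections; simpl; ring. }
   rewrite E1. specialize (IH Ho' Hn' a').
   assert (E2 : fst (ip a' a') = fst (ip a a) - Cmod s ^ 2 / N).
   { unfold a'. rewrite ip_quad. rewrite (ip_conj a v). fold s. rewrite Hvv. unfold lam.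
     unfold Cmod. destruct s as [s1 s2]. simpl fst; simpl snd. rewrite pow2_sqrt. simpl. field. lra. nra. }
   rewrite E2 in IH. assert (N * (Cmod s ^ 2 / N) = Cmod s ^ 2) by (field; lra). nra. Qed.

End Chars.

Lemma rs_mono_N f N N' : (forall i, 0 <= f i) -> (N <= N')%nat -> rs f N <= rs f N'.
Proof. intros Hf H. induction H. lra. simpl. specialize (Hf m). lra. Qed.

Lemma count_le (P : nat -> bool) (qq : nat) lo hi N : (1 <= qq)%nat ->
  0 <= (hi - lo) / INR qq + 1 ->
  (forall n, P n = true -> lo <= INR n <= hi) ->
  (forall m n, P m = true -> P n = true -> (m < n)%nat -> (m + qq <= n)%nat) ->
  rs (fun n => if P n then 1 else 0) N <= (hi - lo) / INR qq + 1.
Proof. intros Hq Hpos HP Hs.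
 assert (Hqr : 1 <= INR qq) by (apply (le_INR 1); auto).
 assert (Inv : forall N, rs (fun n => if P n then 1 else 0) N = 0 \/
   exists m0, (m0 < N)%nat /\ P m0 = true /\ (rs (fun n => if P n then 1 else 0) N - 1) * INR qq <= INR m0 - lo).
 { induction N0. left; auto. simpl. destruct (P N0) eqn:E.
   - right. destruct IHN0 as [Z|[m0 [H1 [H2 H3]]]].
     + exists N0. split. lia. split; auto. rewrite Z. specialize (HP N0 E). lra.
     + exists N0. split. lia. split; auto. pose proof (Hs m0 N0 H2 E H1).
       apply le_INR in H. rewrite plus_INR in H. nra.
   - rewrite Rplus_0_r. destruct IHN0 as [Z|[m0 [H1 [H2 H3]]]]. left; auto. right. exists m0. split. lia. auto. }
 destruct (Inv N) as [Z|[m0 [H1 [H2 H3]]]].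
 - rewrite Z. auto.
 - specialize (HP m0 H2). apply (Rmult_le_reg_r (INR qq)). lra.
   unfold Rdiv. rewrite Rmult_plus_distr_r, Rmult_assoc, Rinv_l by lra. nra. Qed.

Lemma sum_le_count (P : nat -> bool) g G N : (forall n, P n = true -> g n <= G) ->
  rs (fun n => if P n then g n else 0) N <= G * rs (fun n => if P n then 1 else 0) N.
Proof. intros H. rewrite <- rs_scal. apply rs_le. intros i _. destruct (P i) eqn:E. rewrite Rmult_1_r; auto. lra. Qed.

Lemma at_most_one (P : nat -> bool) g G N : 0 <= G ->
  (forall m n, P m = true -> P n = true -> (m < n)%nat -> False) ->
  (forall n, P n = true -> g n <= G) ->
  rs (fun n => if P n then g n else 0) N <= G.
Proof. intros HG H1 H2. induction N. simpl; lra. cbn [rs]. destruct (P N) eqn:E.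
 - assert (Z : rs (fun n => if P n then g n else 0) N = rs (fun _ => 0) N).
   { apply rs_ext. intros i Hi. destruct (P i) eqn:E2; auto. exfalso; exact (H1 i N E2 E Hi). }
   rewrite Z, rs_zero. specialize (H2 N E). lra.
 - lra. Qed.

Lemma div_le_1 x y : 0 < y -> x <= y -> x / y <= 1.
Proof. intros Hy Hxy. apply Rmult_le_reg_r with y. auto. unfold Rdiv. rewrite Rmult_assoc, Rinv_l by lra. lra. Qed.

Lemma cs_lemma (U w : nat -> R) Q B b : 0 <= B -> 0 <= b ->
  rs (fun r => U r ^ 2) Q <= B ^ 2 -> rs (fun r => w r ^ 2) Q <= b ^ 2 ->
  rs (fun r => U r * w r) Q <= B * b.
Proof. intros HB Hb H1 H2.
 assert (Hl : forall l, 0 < l -> 2 * rs (fun r => U r * w r) Q <= l * B^2 + b^2 / l).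
 { intros l Hl. apply Rle_trans with (l * rs (fun r => U r ^ 2) Q + rs (fun r => w r ^ 2) Q / l).
   - assert (Eq : l * rs (fun r => U r ^ 2) Q + rs (fun r => w r ^ 2) Q / l =
        rs (fun r => l * U r ^ 2 + w r ^ 2 * / l) Q).
     { rewrite rs_plus. f_equal. rewrite rs_scal; auto. unfold Rdiv. rewrite Rmult_comm, <- rs_scal.
       apply rs_ext; intros; ring. }
     rewrite Eq, <- rs_scal. apply rs_le. intros i _.
     assert (0 < / l) by (apply Rinv_0_lt_compat; lra).
     assert (0 <= (l * U i - w i)^2 * / l) by (apply Rmult_le_pos; [apply pow2_ge_0|lra]).
     replace ((l * U i - w i)^2 * / l) with (l * U i ^2 + w i ^2 * / l - 2 * (U i * w i)) in H0.
     lra. field. lra.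
   - assert (0 < / l) by (apply Rinv_0_lt_compat; lra). unfold Rdiv. nra. }
 destruct (Rle_dec (rs (fun r => U r * w r) Q) (B * b)) as [Ok|Nk]; auto. exfalso.
 set (S := rs (fun r => U r * w r) Q) in *.
 set (e := (S - B * b) / (B + b + 1)).
 assert (He : 0 < e) by (unfold e; apply Rdiv_lt_0_compat; lra).
 specialize (Hl ((b + e) / (B + e))). 
 assert (Hl1 : 0 < (b + e) / (B + e)) by (apply Rdiv_lt_0_compat; lra).
 specialize (Hl Hl1).
 assert (E1 : (b + e) / (B + e) * B ^ 2 <= (b + e) * B).
 { unfold Rdiv. replace ((b+e) * / (B+e) * B^2) with ((b+e) * B * (B / (B+e))) by (field; lra).
   assert (B / (B + e) <= 1). apply div_le_1; lra. assert (0 <= (b+e)*B) by nra.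
   assert (0 <= B / (B+e)) by (apply Rdiv_le_0_compat; lra). nra. }
 assert (E2 : b ^ 2 / ((b + e) / (B + e)) <= b * (B + e)).
 { replace (b ^ 2 / ((b + e) / (B + e))) with (b * (B + e) * (b / (b + e))) by (field; lra).
   assert (b / (b + e) <= 1). apply div_le_1; lra. assert (0 <= b*(B+e)) by nra.
   assert (0 <= b / (b+e)) by (apply Rdiv_le_0_compat; lra). nra. }
 assert (2 * S <= 2 * B * b + e * (B + b)) by lra.
 assert (e * (B + b + 1) = S - B * b) by (unfold e; field; lra). nra. Qed.

Lemma minkowski (v : nat -> nat -> R) (beta : nat -> R) M Q :
  (forall c, 0 <= beta c) ->
  (forall c, (c < M)%nat -> rs (fun r => (v c r) ^ 2) Q <= (beta c) ^ 2) ->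
  rs (fun r => (rs (fun c => v c r) M) ^ 2) Q <= (rs beta M) ^ 2.
Proof. intros Hb H. induction M.
 - cbn [rs]. assert (Z : rs (fun _ => 0 ^ 2) Q = rs (fun _ => 0) Q) by (apply rs_ext; intros; ring).
   rewrite Z, rs_zero. lra.
 - cbn [rs]. assert (IH : rs (fun r => rs (fun c => v c r) M ^ 2) Q <= rs beta M ^ 2) by (apply IHM; intros; apply H; lia).
   assert (HM : rs (fun r => v M r ^ 2) Q <= beta M ^ 2) by (apply H; lia).
   assert (0 <= rs beta M) by (apply rs_nonneg; intros; apply Hb).
   pose proof (cs_lemma (fun r => rs (fun c => v c r) M) (fun r => v M r) Q (rs beta M) (beta M) H0 (Hb M) IH HM).
   replace (rs (fun r => (rs (fun c => v c r) M + v M r) ^ 2) Q) with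
     (rs (fun r => rs (fun c => v c r) M ^ 2) Q + 2 * rs (fun r => rs (fun c => v c r) M * v M r) Q + rs (fun r => v M r ^ 2) Q).
   nra. rewrite <- rs_scal, <- !rs_plus. apply rs_ext; intros; ring. Qed.

Lemma tele_cube m N : (1 <= m)%nat ->
  rs (fun c => if (m <=? c)%nat then / (INR c ^ 3) else 0) N <= 2 / (INR m ^ 2).
Proof. intros Hm.
 assert (Hmr : 1 <= INR m) by (apply (le_INR 1); auto).
 assert (G : forall N, (m <= N)%nat -> rs (fun c => if (m <=? c)%nat then / (INR c ^ 3) else 0) N <= 2 / INR m ^ 2 - 2 / INR N ^ 2).
 { intros N0 H. induction H.
   - assert (Z : rs (fun c => if (m <=? c)%nat then / (INR c ^ 3) else 0) m = rs (fun _ => 0) m).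
     { apply rs_ext. intros i Hi. destruct (Nat.leb_spec m i); auto; lia. }
     rewrite Z, rs_zero. lra.
   - cbn [rs]. destruct (Nat.leb_spec m m0); [|lia].
     assert (Hr : 1 <= INR m0) by (apply (le_INR 1); lia). rewrite S_INR.
     assert (/ INR m0 ^ 3 <= 2 / INR m0 ^ 2 - 2 / (INR m0 + 1) ^ 2).
     { set (y := INR m0) in *. unfold Rdiv. apply Rmult_le_reg_r with (y^3 * (y+1)^2). 
       assert (0 < y^3) by (apply pow_lt; lra). assert (0 < (y+1)^2) by (apply pow_lt; lra). nra.
       field_simplify; try lra. nra. }
     lra. }
 destruct (Nat.le_gt_cases m N).
 - specialize (G N H). assert (0 <= 2 / INR N ^2). apply Rdiv_le_0_compat. lra. apply pow_lt. apply (lt_INR 0); lia. lra.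
 - assert (Z : rs (fun c => if (m <=? c)%nat then / (INR c ^ 3) else 0) N = rs (fun _ => 0) N).
   { apply rs_ext. intros i Hi. destruct (Nat.leb_spec m i); auto; lia. }
   rewrite Z, rs_zero. apply Rdiv_le_0_compat. lra. apply pow_lt; lra. Qed.

Section AP.
Variable q : nat.
Hypothesis Hq2 : (2 <= q)%nat.
Hypothesis Hqp : forall d, Nat.divide d q -> d = 1%nat \/ d = q.

Lemma mod_sub_lemma X Y r r' : (r < q)%nat -> (r' < q)%nat -> ((X + Y) mod q = r)%nat ->
  (Y mod q = (r + q - r') mod q)%nat -> (X mod q = r')%nat.
Proof. intros Hr Hr' E1 E2.
 rewrite Nat.Div0.add_mod, E2, <- Nat.Div0.add_mod, <- Nat.Div0.add_mod_idemp_l in E1.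
 set (x0 := (X mod q)%nat) in *. assert (Hx0 : (x0 < q)%nat) by (apply Nat.mod_upper_bound; lia).
 set (w := (X + (r + q - r'))%nat) in *.
 pose proof (Nat.div_mod_eq (x0 + (r + q - r')) q). rewrite E1 in H.
 set (k := ((x0 + (r + q - r')) / q)%nat) in *.
 destruct k as [|[|k]]; nia. Qed.

Lemma spacing e m n r : (m * e) mod q = r -> (n * e) mod q = r -> (m < n)%nat ->
  ~ Nat.divide q e -> (m + q <= n)%nat.
Proof. intros E1 E2 Hmn He. assert (Nat.divide q (n * e - m * e)).
 { apply mod_eq_divide; auto. nia. congruence. }
 rewrite <- Nat.mul_sub_distr_r in H. apply euclid in H; auto. destruct H as [D|D]; [|contradiction].
 apply Nat.divide_pos_le in D; lia. Qed.

Lemma ap_half (e : nat) (He : ~ Nat.divide q e) (J : nat -> bool) (K : nat) (g : nat -> R) (G : R)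
 (HJK : forall n, J n = true -> (n <= K)%nat)
 (HJc : forall m n k, J m = true -> J n = true -> (m <= k <= n)%nat -> J k = true)
 (Hmono : forall m n, J m = true -> J n = true -> (m <= n)%nat -> g n <= g m)
 (Hpos : forall n, J n = true -> 0 <= g n) (HG : forall n, J n = true -> g n <= G) (HG0 : 0 <= G)
 r r' (Hr : (r < q)%nat) (Hr' : (r' < q)%nat) :
 rs (fun n => if (((n * e) mod q =? r)%nat && J n)%bool then g n else 0) (S K) <=
 rs (fun n => if (((n * e) mod q =? r')%nat && J n)%bool then g n else 0) (S K) + G.
Proof.
 destruct (mul_surj q Hq2 Hqp e (r + q - r') He) as [d [Hd Hde]].
 set (A := fun n => (((n * e) mod q =? r)%nat && J n && (d <=? n)%nat && J (n - d)%nat)%bool).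
 set (Rm := fun n => (((n * e) mod q =? r)%nat && J n && negb ((d <=? n)%nat && J (n - d)%nat))%bool).
 set (Bf := fun n => if (((n * e) mod q =? r')%nat && J n)%bool then g n else 0).
 assert (HBf : forall n, 0 <= Bf n).
 { intros n. unfold Bf. destruct (((n * e) mod q =? r')%nat && J n)%bool eqn:E. apply Hpos.
   apply andb_true_iff in E; tauto. lra. }
 assert (Split : rs (fun n => if (((n * e) mod q =? r)%nat && J n)%bool then g n else 0) (S K) =
   rs (fun n => if A n then g n else 0) (S K) + rs (fun n => if Rm n then g n else 0) (S K)).
 { rewrite <- rs_plus. apply rs_ext. intros i _. unfold A, Rm.
   destruct ((i * e) mod q =? r)%nat, (J i), (d <=? i)%nat, (J (i - d)%nat); simpl; lra. }
 rewrite Split.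
 assert (R1 : rs (fun n => if Rm n then g n else 0) (S K) <= G).
 { apply at_most_one; auto.
   - intros m n Hm Hn Hmn. unfold Rm in Hm, Hn.
     apply andb_true_iff in Hm as [Hm Hm3]. apply andb_true_iff in Hm as [Hm1 Hm2].
     apply andb_true_iff in Hn as [Hn Hn3]. apply andb_true_iff in Hn as [Hn1 Hn2].
     apply Nat.eqb_eq in Hm1, Hn1.
     pose proof (spacing e m n r Hm1 Hn1 Hmn He).
     apply negb_true_iff, andb_false_iff in Hn3. destruct Hn3 as [D|D].
     + apply Nat.leb_gt in D. lia.
     + rewrite (HJc m n (n - d)%nat Hm2 Hn2) in D. discriminate. lia.
   - intros n Hn. apply HG. unfold Rm in Hn. apply andb_true_iff in Hn as [Hn _]. apply andb_true_iff in Hn; tauto. }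
 assert (R2 : rs (fun n => if A n then g n else 0) (S K) <= rs Bf (S K)).
 { destruct (Nat.le_gt_cases d (S K)) as [Hle|Hgt].
   - rewrite (rs_split (S K) d _ Hle).
     assert (Z : rs (fun n => if A n then g n else 0) d = 0).
     { transitivity (rs (fun _ => 0) d); [|apply rs_zero]. apply rs_ext. intros i Hi. unfold A.
       destruct (Nat.leb_spec d i). lia. rewrite andb_false_r. reflexivity. }
     rewrite Z, Rplus_0_l. apply Rle_trans with (rs Bf (S K - d)).
     + apply rs_le. intros i _. unfold A, Bf.
       destruct (((i + d) * e) mod q =? r)%nat eqn:E1; simpl; [|apply HBf].
       destruct (J (i + d)%nat) eqn:E2; simpl; [|apply HBf].
       destruct (Nat.leb_spec d (i + d)); simpl; [|lia].
       replace (i + d - d)%nat with i by lia.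
       destruct (J i) eqn:E3; [|rewrite andb_false_r; lra].
       apply Nat.eqb_eq in E1. rewrite Nat.mul_add_distr_r in E1.
       rewrite (mod_sub_lemma _ _ r r' Hr Hr' E1 Hde), Nat.eqb_refl. simpl.
       apply Hmono; auto. lia.
     + apply rs_mono_N; auto. lia.
   - apply Rle_trans with 0. right. transitivity (rs (fun _ => 0) (S K)); [|apply rs_zero]. apply rs_ext. intros i Hi. unfold A.
     destruct (Nat.leb_spec d i). lia. rewrite andb_false_r. reflexivity.
     apply rs_nonneg. intros; apply HBf. }
 lra. Qed.

Lemma ap_lemma (e : nat) (He : ~ Nat.divide q e) (J : nat -> bool) (K : nat) (g : nat -> R) (G : R)
 (HJK : forall n, J n = true -> (n <= K)%nat)
 (HJc : forall m n k, J m = true -> J n = true -> (m <= k <= n)%nat -> J k = true)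
 (Hmono : forall m n, J m = true -> J n = true -> (m <= n)%nat -> g n <= g m)
 (Hpos : forall n, J n = true -> 0 <= g n) (HG : forall n, J n = true -> g n <= G) (HG0 : 0 <= G)
 r r' (Hr : (r < q)%nat) (Hr' : (r' < q)%nat) :
 Rabs (rs (fun n => if (((n * e) mod q =? r)%nat && J n)%bool then g n else 0) (S K) -
 rs (fun n => if (((n * e) mod q =? r')%nat && J n)%bool then g n else 0) (S K)) <= G.
Proof. pose proof (ap_half e He J K g G HJK HJc Hmono Hpos HG HG0 r r' Hr Hr').
 pose proof (ap_half e He J K g G HJK HJc Hmono Hpos HG HG0 r' r Hr' Hr).
 apply Rabs_le. lra. Qed.
End AP.

Lemma pow_lt_mono x y n : 0 <= y < x -> (0 < n)%nat -> y ^ n < x ^ n.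
Proof. intros H Hn. induction n. lia. destruct n. simpl; lra.
 assert (y ^ S n < x ^ S n) by (apply IHn; lia).
 assert (0 <= y ^ S n) by (apply pow_le; lra).
 change (y * y ^ S n < x * x ^ S n). nra. Qed.

Lemma pow_le_inv x y n : 0 <= x -> 0 <= y -> (0 < n)%nat -> x ^ n <= y ^ n -> x <= y.
Proof. intros Hx Hy Hn H. destruct (Rle_dec x y); auto.
 assert (y ^ n < x ^ n) by (apply pow_lt_mono; auto; lra). lra. Qed.

Lemma in_int_bounds a b lc rc u : in_interval a b lc rc u = true -> a <= u <= b.
Proof. unfold in_interval. intros H. apply andb_true_iff in H as [H1 H2].
 destruct lc; destruct rc; [destruct (Rle_dec a u), (Rle_dec u b)|destruct (Rle_dec a u), (Rlt_dec u b)
 |destruct (Rlt_dec a u), (Rle_dec u b)|destruct (Rlt_dec a u), (Rlt_dec u b)]; try discriminate; lra. Qed.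

Lemma in_int_conv a b lc rc u v w : in_interval a b lc rc u = true -> in_interval a b lc rc w = true ->
  u <= v <= w -> in_interval a b lc rc v = true.
Proof. unfold in_interval. intros H1 H2 H. apply andb_true_iff in H1 as [H1 _]. apply andb_true_iff in H2 as [_ H2].
 apply andb_true_iff. split.
 - destruct lc; [destruct (Rle_dec a u), (Rle_dec a v)|destruct (Rlt_dec a u), (Rlt_dec a v)]; auto; try discriminate; lra.
 - destruct rc; [destruct (Rle_dec w b), (Rle_dec v b)|destruct (Rlt_dec w b), (Rlt_dec v b)]; auto; try discriminate; lra. Qed.

Lemma mobius_abs c : Rabs (mobius c) <= 1.
Proof. unfold mobius. destruct (c =? 0)%nat. rewrite Rabs_R0; lra.
 destruct (forallb _ _). rewrite pow_1_abs; lra. rewrite Rabs_R0; lra. Qed.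

Definition Bc : R := Rabs (zeta (3/2)) / 2 + Rabs (zeta (2/3)) / 3.
Definition g1 (n : nat) : R := / Rpower (INR n) (1/2).
Definition g2 (n : nat) : R := / Rpower (INR n) (2/3).

Lemma f_split n : (1 <= n)%nat -> f (INR n) = zeta (3/2) / 2 * g1 n + zeta (2/3) / 3 * g2 n.
Proof. intros H. assert (0 < INR n) by (apply (lt_INR 0); lia). unfold f, g1, g2.
 assert (0 < Rpower (INR n) (1/2)) by apply exp_pos. assert (0 < Rpower (INR n) (2/3)) by apply exp_pos.
 field. lra. Qed.

Lemma g1_pos n : (1 <= n)%nat -> 0 < g1 n.
Proof. intros. unfold g1. apply Rinv_0_lt_compat, exp_pos. Qed.
Lemma g2_pos n : (1 <= n)%nat -> 0 < g2 n.
Proof. intros. unfold g2. apply Rinv_0_lt_compat, exp_pos. Qed.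

Lemma g_anti (e : R) m n : 0 <= e -> (1 <= m)%nat -> (m <= n)%nat ->
  / Rpower (INR n) e <= / Rpower (INR m) e.
Proof. intros He Hm Hmn. apply Rinv_le_contravar. apply exp_pos.
 apply Rle_Rpower_l; auto. split. apply (lt_INR 0); lia. apply le_INR; auto. Qed.

Lemma g2_le_g1 n : (1 <= n)%nat -> g2 n <= g1 n.
Proof. intros H. unfold g1, g2. apply Rinv_le_contravar. apply exp_pos. apply Rle_Rpower.
 apply (le_INR 1); auto. lra. Qed.

Lemma g1_bound n (c x : R) : 0 < x -> 0 < c -> (1 <= n)%nat -> x <= INR n * c ^ 6 ->
  g1 n <= c ^ 3 / sqrt x.
Proof. intros Hx Hc Hn H. unfold g1.
 assert (Hn' : 0 < INR n) by (apply (lt_INR 0); lia).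
 replace (1/2) with (/2) by field. rewrite Rpower_sqrt by auto.
 assert (0 < sqrt (INR n)) by (apply sqrt_lt_R0; auto). assert (0 < sqrt x) by (apply sqrt_lt_R0; auto).
 assert (sqrt x <= c ^ 3 * sqrt (INR n)).
 { rewrite <- (sqrt_pow2 (c ^ 3 * sqrt (INR n))). apply sqrt_le_1_alt.
   replace ((c ^ 3 * sqrt (INR n)) ^ 2) with (c ^ 6 * (sqrt (INR n) ^ 2)) by ring.
   rewrite pow2_sqrt by lra. lra. assert (0 < c^3) by (apply pow_lt; auto). nra. }
 apply Rmult_le_reg_r with (sqrt x * sqrt (INR n)). nra.
 field_simplify; try lra. Qed.

Section Main.
Variables x z a b : R.
Variables lc rc : bool.
Variables q K : nat.
Hypothesis Hx : 0 < x.
Hypothesis Hq2 : (2 <= q)%nat.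
Hypothesis Hqp : forall d, Nat.divide d q -> d = 1%nat \/ d = q.
Hypothesis Hz : 0 < z.
Hypothesis Hz2 : z <= 2 * x.
Hypothesis Ha : x <= a.
Hypothesis Hab : a <= b.
Hypothesis Hb : b <= 3 * x.
Hypothesis HK : 3 * x <= INR K.

Definition Pc (c n : nat) : bool :=
  ((1 <=? c)%nat && (1 <=? n)%nat && (if Rle_dec (INR c ^ 6) z then true else false) &&
   in_interval a b lc rc (INR n * INR c ^ 6))%bool.
Definition W (c n : nat) : R := if Pc c n then mobius c * f (INR n) else 0.
Definition rho (c n : nat) : nat := ((n * c ^ 6) mod q)%nat.
Definition Jc (c n : nat) : bool := ((1 <=? n)%nat && in_interval a b lc rc (INR n * INR c ^ 6))%bool.
Definition Goodc (c : nat) : bool := ((1 <=? c)%nat && (if Rle_dec (INR c ^ 6) z then true else false))%bool.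
Definition Tn (c r : nat) : R := rs (fun n => if ((rho c n =? r)%nat && Jc c n)%bool then f (INR n) else 0) (S K).
Definition HH : R := b - a.
Definition Y : R := HH / INR q.
Definition tt : R := Rpower z (1/6).
Definition Gc (c : nat) : R := INR c ^ 3 / sqrt x.

Lemma Hqr : 2 <= INR q.
Proof. apply (le_INR 2); auto. Qed.

Lemma Pc_split c n : Pc c n = (Goodc c && Jc c n)%bool.
Proof. unfold Pc, Goodc, Jc. destruct (1 <=? c)%nat, (1 <=? n)%nat, (Rle_dec (INR c ^ 6) z),
 (in_interval a b lc rc (INR n * INR c ^ 6)); reflexivity. Qed.

Lemma rho_lt c n : (rho c n < q)%nat.
Proof. unfold rho. apply Nat.mod_upper_bound. lia. Qed.

Lemma c6_ge1 c : (1 <= c)%nat -> 1 <= INR c ^ 6.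
Proof. intros H. assert (1 <= INR c) by (apply (le_INR 1); auto).
 replace 1 with (1 ^ 6) by ring. apply pow_incr. lra. Qed.

Lemma Jc_bounds c n : Jc c n = true -> (1 <= n)%nat /\ a <= INR n * INR c ^ 6 <= b.
Proof. unfold Jc. intros H. apply andb_true_iff in H as [H1 H2]. split.
 apply Nat.leb_le; auto. apply in_int_bounds in H2; auto. Qed.

Lemma Jc_le_K c n : (1 <= c)%nat -> Jc c n = true -> (n <= K)%nat.
Proof. intros Hc H. apply Jc_bounds in H as [H1 [H2 H3]]. apply INR_le.
 pose proof (c6_ge1 c Hc). assert (0 <= INR n) by apply pos_INR. nra. Qed.

Lemma Jc_conv c m n k : Jc c m = true -> Jc c n = true -> (m <= k <= n)%nat -> Jc c k = true.
Proof. intros Hm Hn Hk. unfold Jc in *. apply andb_true_iff in Hm as [Hm1 Hm2]. apply andb_true_iff in Hn as [Hn1 Hn2].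
 apply andb_true_iff. split. apply Nat.leb_le. apply Nat.leb_le in Hm1. lia.
 apply (in_int_conv _ _ _ _ _ _ _ Hm2 Hn2).
 assert (0 <= INR c ^ 6) by (apply pow_le, pos_INR).
 assert (INR m <= INR k) by (apply le_INR; lia). assert (INR k <= INR n) by (apply le_INR; lia). nra. Qed.

Lemma Jc_x c n : (1 <= c)%nat -> Jc c n = true -> x <= INR n * INR c ^ 6.
Proof. intros Hc H. apply Jc_bounds in H. lra. Qed.

Lemma f_bound c n : (1 <= c)%nat -> Jc c n = true -> Rabs (f (INR n)) <= Bc * Gc c.
Proof. intros Hc H. pose proof (Jc_bounds c n H) as [Hn _].
 assert (Hcr : 0 < INR c) by (apply (lt_INR 0); lia).
 pose proof (g1_bound n (INR c) x Hx Hcr Hn (Jc_x c n Hc H)).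
 pose proof (g2_le_g1 n Hn). pose proof (g1_pos n Hn). pose proof (g2_pos n Hn).
 assert (E1 : g1 n <= Gc c) by (unfold Gc; auto). assert (E2 : g2 n <= Gc c) by lra.
 rewrite f_split by auto. unfold Bc.
 eapply Rle_trans. apply Rabs_triang. rewrite !Rabs_mult, (Rabs_right (g1 n)), (Rabs_right (g2 n)) by lra.
 set (z1 := zeta (3/2)). set (z2 := zeta (2/3)).
 assert (0 <= Rabs z1) by apply Rabs_pos. assert (0 <= Rabs z2) by apply Rabs_pos.
 unfold Rdiv. rewrite !Rabs_mult. rewrite (Rabs_right (/2)), (Rabs_right (/3)) by lra.
 set (A1 := Rabs z1) in *. set (A2 := Rabs z2) in *.
 assert (A1 * / 2 * g1 n <= A1 * / 2 * Gc c) by (apply Rmult_le_compat_l; lra).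
 assert (A2 * / 3 * g2 n <= A2 * / 3 * Gc c) by (apply Rmult_le_compat_l; lra). lra. Qed.

Lemma tt_pow6 : tt ^ 6 = z.
Proof. unfold tt. rewrite <- Rpower_pow by apply exp_pos. rewrite Rpower_mult.
 replace (1/6 * INR 6) with 1 by (simpl; field). apply Rpower_1; auto. Qed.

Lemma tt_pos : 0 < tt.
Proof. apply exp_pos. Qed.

Lemma Good_t c : Goodc c = true -> (1 <= c)%nat /\ INR c <= tt.
Proof. unfold Goodc. intros H. apply andb_true_iff in H as [H1 H2]. split. apply Nat.leb_le; auto.
 destruct (Rle_dec (INR c ^ 6) z); [|discriminate]. apply (pow_le_inv _ _ 6). apply pos_INR.
 pose proof tt_pos; lra. lia. rewrite tt_pow6. auto. Qed.

Lemma sumW c r : rs (fun n => if (rho c n =? r)%nat then W c n else 0) (S K) =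
  if Goodc c then mobius c * Tn c r else 0.
Proof. unfold W, Tn. destruct (Goodc c) eqn:E.
 - rewrite <- rs_scal. apply rs_ext. intros i _. rewrite Pc_split, E. simpl.
   destruct (rho c i =? r)%nat, (Jc c i); simpl; ring.
 - transitivity (rs (fun _ => 0) (S K)); [|apply rs_zero]. apply rs_ext. intros i _. rewrite Pc_split, E. simpl.
   destruct (rho c i =? r)%nat; auto. Qed.

Lemma cnt_J c N : (1 <= c)%nat -> rs (fun n => if Jc c n then 1 else 0) N <= HH / INR c ^ 6 + 1.
Proof. intros Hc. pose proof (c6_ge1 c Hc). assert (Hc6 : INR c ^ 6 <> 0) by (apply Rgt_not_eq; lra). assert (Hc0 : INR c <> 0) by (intro E0; rewrite E0 in Hc6; apply Hc6; ring).
 replace (HH / INR c ^ 6 + 1) with ((b / INR c ^ 6 - a / INR c ^ 6) / INR 1 + 1) by (unfold HH; change (INR 1) with 1; field; auto).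
 apply count_le. lia. change (INR 1) with 1. assert (0 <= (b - a) / INR c ^ 6) by (apply Rdiv_le_0_compat; lra).
 replace ((b / INR c ^ 6 - a / INR c ^ 6) / 1) with ((b-a) / INR c ^ 6) by (field; auto). lra.
 - intros n Hn. apply Jc_bounds in Hn as [_ [H1 H2]]. split.
   apply Rmult_le_reg_r with (INR c ^ 6). lra. unfold Rdiv; rewrite Rmult_assoc, Rinv_l by lra. lra.
   apply Rmult_le_reg_r with (INR c ^ 6). lra. unfold Rdiv; rewrite Rmult_assoc, Rinv_l by lra. lra.
 - intros; lia. Qed.

Lemma cnt_cls c r N : (1 <= c)%nat -> r <> 0%nat ->
  rs (fun n => if ((rho c n =? r)%nat && Jc c n)%bool then 1 else 0) N <= Y / INR c ^ 6 + 1.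
Proof. intros Hc Hr. pose proof (c6_ge1 c Hc). pose proof Hqr. assert (Hc6 : INR c ^ 6 <> 0) by (apply Rgt_not_eq; lra). assert (Hc0 : INR c <> 0) by (intro E0; rewrite E0 in Hc6; apply Hc6; ring).
 assert (Hq0 : INR q <> 0) by (apply Rgt_not_eq; lra).
 replace (Y / INR c ^ 6 + 1) with ((b / INR c ^ 6 - a / INR c ^ 6) / INR q + 1) by (unfold Y, HH; field; auto).
 apply count_le. lia.
 assert (0 <= (b / INR c ^ 6 - a / INR c ^ 6) / INR q). apply Rdiv_le_0_compat; [|lra].
 unfold Rdiv. rewrite <- Rmult_minus_distr_r. apply Rmult_le_pos. lra. apply Rlt_le, Rinv_0_lt_compat; lra. lra.
 - intros n Hn. apply andb_true_iff in Hn as [_ Hn]. apply Jc_bounds in Hn as [_ [H1 H2]]. split.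
   apply Rmult_le_reg_r with (INR c ^ 6). lra. unfold Rdiv; rewrite Rmult_assoc, Rinv_l by lra. lra.
   apply Rmult_le_reg_r with (INR c ^ 6). lra. unfold Rdiv; rewrite Rmult_assoc, Rinv_l by lra. lra.
 - intros m n Hm Hn Hmn. apply andb_true_iff in Hm as [Hm _]. apply andb_true_iff in Hn as [Hn _].
   apply Nat.eqb_eq in Hm, Hn. unfold rho in *. apply (spacing q Hq2 Hqp (c ^ 6) m n r); auto.
   intros D. apply divide_mod in D; auto. rewrite Nat.Div0.mul_mod, D, Nat.mul_0_r, Nat.Div0.mod_0_l in Hm. lia. Qed.

Definition u (c r : nat) : R := rs (fun n => if ((rho c n =? r)%nat && Jc c n)%bool then Rabs (f (INR n)) else 0) (S K).

Lemma Gc_nonneg c : 0 <= Gc c.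
Proof. unfold Gc. apply Rdiv_le_0_compat. apply pow_le, pos_INR. apply sqrt_lt_R0; auto. Qed.

Lemma Bc_nonneg : 0 <= Bc.
Proof. unfold Bc. pose proof (Rabs_pos (zeta (3/2))). pose proof (Rabs_pos (zeta (2/3))). lra. Qed.

Lemma u_nonneg c r : 0 <= u c r.
Proof. unfold u. apply rs_nonneg. intros i _. destruct (_ && _)%bool. apply Rabs_pos. lra. Qed.

Lemma Tn_abs c r : Rabs (Tn c r) <= u c r.
Proof. unfold Tn, u. eapply Rle_trans. apply rs_abs. apply rs_le. intros i _. destruct (_ && _)%bool. lra.
 rewrite Rabs_R0; lra. Qed.

Lemma u_le_mx c r : (1 <= c)%nat -> r <> 0%nat -> u c r <= Bc * Gc c * (Y / INR c ^ 6 + 1).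
Proof. intros Hc Hr. unfold u. eapply Rle_trans. apply (sum_le_count _ _ (Bc * Gc c)).
 intros n Hn. apply andb_true_iff in Hn as [_ Hn]. apply f_bound; auto.
 apply Rmult_le_compat_l. pose proof Bc_nonneg; pose proof (Gc_nonneg c); nra. apply cnt_cls; auto. Qed.

Lemma sum_u c : (1 <= c)%nat -> rs (fun r => u c r) q <= Bc * Gc c * (HH / INR c ^ 6 + 1).
Proof. intros Hc. unfold u. rewrite rs_exchange.
 transitivity (rs (fun n => if Jc c n then Rabs (f (INR n)) else 0) (S K)).
 - right. apply rs_ext. intros n _.
   transitivity (rs (fun r => if (rho c n =? r)%nat then (if Jc c n then Rabs (f (INR n)) else 0) else 0) q).
   apply rs_ext. intros r _. destruct (rho c n =? r)%nat, (Jc c n); auto.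
   apply rs_indic. apply rho_lt.
 - eapply Rle_trans. apply (sum_le_count _ _ (Bc * Gc c)). intros n Hn. apply f_bound; auto.
   apply Rmult_le_compat_l. pose proof Bc_nonneg; pose proof (Gc_nonneg c); nra. apply cnt_J; auto. Qed.

Definition S1 (e r : nat) (g : nat -> R) : R :=
  rs (fun n => if (((n * e) mod q =? r)%nat && Jc (0%nat) n)%bool then g n else 0) (S K).

Lemma Tn_split c r : (1 <= c)%nat -> Tn c r =
  zeta (3/2) / 2 * rs (fun n => if ((rho c n =? r)%nat && Jc c n)%bool then g1 n else 0) (S K) +
  zeta (2/3) / 3 * rs (fun n => if ((rho c n =? r)%nat && Jc c n)%bool then g2 n else 0) (S K).
Proof. intros Hc. unfold Tn. rewrite <- !rs_scal, <- rs_plus. apply rs_ext. intros n _.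
 destruct (rho c n =? r)%nat, (Jc c n) eqn:E; simpl; try ring.
 apply Jc_bounds in E as [E _]. apply f_split; auto. Qed.

Lemma P1c c r : Goodc c = true -> r <> 0%nat -> (r < q)%nat -> Rabs (Tn c r - Tn c 1) <= Bc * Gc c.
Proof. intros Hg Hr Hrq. destruct (Good_t c Hg) as [Hc _]. pose proof Bc_nonneg. pose proof (Gc_nonneg c).
 destruct (Nat.eq_dec ((c ^ 6) mod q) 0) as [D|D].
 - assert (Z : forall r', r' <> 0%nat -> Tn c r' = 0).
   { intros r' Hr'. unfold Tn. transitivity (rs (fun _ => 0) (S K)); [|apply rs_zero]. apply rs_ext. intros n _.
     unfold rho. rewrite Nat.Div0.mul_mod, D, Nat.mul_0_r, Nat.Div0.mod_0_l.
     destruct (Nat.eqb_spec 0 r'). lia. reflexivity. }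
   rewrite !Z by lia. rewrite Rminus_0_r, Rabs_R0. nra.
 - assert (He : ~ Nat.divide q (c ^ 6)). { intros Dv. apply divide_mod in Dv; auto. }
   assert (AP1 : forall g (ex : R), 0 <= ex -> (forall n, g n = / Rpower (INR n) ex) ->
     (forall n, Jc c n = true -> g n <= Gc c) ->
     Rabs (rs (fun n => if ((rho c n =? r)%nat && Jc c n)%bool then g n else 0) (S K) -
           rs (fun n => if ((rho c n =? 1)%nat && Jc c n)%bool then g n else 0) (S K)) <= Gc c).
   { intros g ex Hex Hgd HgG. unfold rho. apply (ap_lemma q Hq2 Hqp (c ^ 6) He (Jc c) K g (Gc c)).
     - intros n Hn. apply (Jc_le_K c n); auto.
     - intros m n k Hm Hn Hk; apply (Jc_conv c m n k); auto.
     - intros m n Hm Hn Hmn. rewrite !Hgd. apply g_anti; auto. apply Jc_bounds in Hm; tauto.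
     - intros n Hn. rewrite Hgd. apply Rlt_le, Rinv_0_lt_compat, exp_pos.
     - auto.
     - apply Gc_nonneg.
     - auto.
     - lia. }
   assert (A1 := AP1 g1 (1/2) ltac:(lra) (fun n => eq_refl) (fun n Hn => g1_bound n (INR c) x Hx
      ltac:(apply (lt_INR 0); lia) (proj1 (Jc_bounds c n Hn)) (Jc_x c n Hc Hn))).
   assert (A2 := AP1 g2 (2/3) ltac:(lra) (fun n => eq_refl) (fun n Hn => Rle_trans _ _ _ (g2_le_g1 n (proj1 (Jc_bounds c n Hn)))
      (g1_bound n (INR c) x Hx ltac:(apply (lt_INR 0); lia) (proj1 (Jc_bounds c n Hn)) (Jc_x c n Hc Hn)))).
   rewrite !Tn_split by auto.
   set (D1 := rs (fun n => if ((rho c n =? r)%nat && Jc c n)%bool then g1 n else 0) (S K) -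
              rs (fun n => if ((rho c n =? 1)%nat && Jc c n)%bool then g1 n else 0) (S K)) in *.
   set (D2 := rs (fun n => if ((rho c n =? r)%nat && Jc c n)%bool then g2 n else 0) (S K) -
              rs (fun n => if ((rho c n =? 1)%nat && Jc c n)%bool then g2 n else 0) (S K)) in *.
   match goal with |- Rabs ?E <= _ => replace E with (zeta (3/2) / 2 * D1 + zeta (2/3) / 3 * D2) by (unfold D1, D2; ring) end.
   eapply Rle_trans. apply Rabs_triang. rewrite !Rabs_mult. unfold Bc.
   set (z1 := zeta (3/2)) in *. set (z2 := zeta (2/3)) in *.
   assert (Rabs (z1 / 2) = Rabs z1 / 2) by (unfold Rdiv; rewrite Rabs_mult, (Rabs_right (/2)); lra).
   assert (Rabs (z2 / 3) = Rabs z2 / 3) by (unfold Rdiv; rewrite Rabs_mult, (Rabs_right (/3)); lra).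
   rewrite H1, H2. pose proof (Rabs_pos z1). pose proof (Rabs_pos z2).
   assert (Rabs z1 / 2 * Rabs D1 <= Rabs z1 / 2 * Gc c) by (apply Rmult_le_compat_l; lra).
   assert (Rabs z2 / 3 * Rabs D2 <= Rabs z2 / 3 * Gc c) by (apply Rmult_le_compat_l; lra). lra. Qed.

Definition Wr (c r : nat) : R := rs (fun n => if (rho c n =? r)%nat then W c n else 0) (S K).
Definition Ar (r : nat) : R := rs (fun c => Wr c r) (S K).
Definition Mm (C0 : nat) : R := rs (fun c => if (c <=? C0)%nat then Wr c 1 else 0) (S K).
Definition P1 (C0 r : nat) : R := rs (fun c => if (c <=? C0)%nat then Wr c r - Wr c 1 else 0) (S K).
Definition P2 (C0 r : nat) : R := rs (fun c => if (c <=? C0)%nat then 0 else Wr c r) (S K).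

Lemma Ar_split C0 r : Ar r - Mm C0 = P1 C0 r + P2 C0 r.
Proof. unfold Ar, Mm, P1, P2. rewrite <- rs_minus, <- rs_plus. apply rs_ext. intros c _.
 destruct (c <=? C0)%nat; ring. Qed.

Lemma cube_sum (T : R) N : 0 <= T ->
  rs (fun c => if ((1 <=? c)%nat && (if Rle_dec (INR c) T then true else false))%bool then INR c ^ 3 else 0) N <= T ^ 4.
Proof. intros HT. eapply Rle_trans. apply (sum_le_count _ _ (T ^ 3)).
 - intros n Hn. apply andb_true_iff in Hn as [_ Hn]. destruct (Rle_dec (INR n) T); [|discriminate].
   apply pow_incr. split; auto. apply pos_INR.
 - assert (C : rs (fun n => if ((1 <=? n)%nat && (if Rle_dec (INR n) T then true else false))%bool then 1 else 0) N <= (T - 1) / INR 1 + 1).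
   { apply count_le. lia. change (INR 1) with 1. lra.
     - intros n Hn. apply andb_true_iff in Hn as [H1 Hn]. destruct (Rle_dec (INR n) T); [|discriminate].
       apply Nat.leb_le in H1. split; auto. apply (le_INR 1); auto.
     - intros; lia. }
   change (INR 1) with 1 in C. replace ((T - 1) / 1 + 1) with T in C by field.
   assert (0 <= T ^ 3) by (apply pow_le; auto). replace (T ^ 4) with (T ^ 3 * T) by ring.
   apply Rmult_le_compat_l; auto. Qed.

Lemma P1_bound C0 r : r <> 0%nat -> (r < q)%nat -> Rabs (P1 C0 r) <= Bc / sqrt x * INR C0 ^ 4.
Proof. intros Hr Hrq. unfold P1. eapply Rle_trans. apply rs_abs.
 assert (0 < sqrt x) by (apply sqrt_lt_R0; auto). pose proof Bc_nonneg.
 eapply Rle_trans with (rs (fun c => Bc / sqrt x * (if ((1 <=? c)%nat && (if Rle_dec (INR c) (INR C0) then true else false))%bool then INR c ^ 3 else 0)) (S K)).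
 - apply rs_le. intros c _. destruct (Nat.leb_spec c C0).
   + unfold Wr. rewrite !sumW. destruct (Goodc c) eqn:E.
     * destruct (Good_t c E) as [Hc _]. replace (mobius c * Tn c r - mobius c * Tn c 1) with (mobius c * (Tn c r - Tn c 1)) by ring.
       rewrite Rabs_mult. pose proof (mobius_abs c). pose proof (P1c c r E Hr Hrq). pose proof (Rabs_pos (Tn c r - Tn c 1)).
       assert (Rabs (mobius c) * Rabs (Tn c r - Tn c 1) <= Bc * Gc c).
       { pose proof (Gc_nonneg c). pose proof (Rabs_pos (mobius c)). nra. }
       eapply Rle_trans. apply H5. destruct (Nat.leb_spec 1 c); [|lia]. destruct (Rle_dec (INR c) (INR C0)); [|exfalso; apply n; apply le_INR; auto].
       simpl. unfold Gc. right; field. lra.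
     * rewrite Rminus_0_r, Rabs_R0. destruct (_ && _)%bool. apply Rmult_le_pos. apply Rdiv_le_0_compat; lra. apply pow_le, pos_INR. lra.
   + rewrite Rabs_R0. destruct (_ && _)%bool. apply Rmult_le_pos. apply Rdiv_le_0_compat; lra. apply pow_le, pos_INR. lra.
 - rewrite rs_scal. apply Rmult_le_compat_l. apply Rdiv_le_0_compat; lra. apply cube_sum. apply pos_INR. Qed.

Definition v (C0 c r : nat) : R := if ((C0 <? c)%nat && Goodc c && negb (r =? 0)%nat)%bool then u c r else 0.
Definition beta (C0 c : nat) : R := if ((C0 <? c)%nat && Goodc c)%bool then
  Bc * Gc c * (sqrt Y / INR c ^ 3 + 1) * (sqrt HH / INR c ^ 3 + 1) else 0.

Lemma P2_bound C0 r : r <> 0%nat -> Rabs (P2 C0 r) <= rs (fun c => v C0 c r) (S K).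
Proof. intros Hr. unfold P2. eapply Rle_trans. apply rs_abs. apply rs_le. intros c _. unfold v.
 destruct (Nat.leb_spec c C0). destruct (Nat.ltb_spec C0 c). lia. simpl. rewrite Rabs_R0; lra.
 destruct (Nat.ltb_spec C0 c); [|lia]. simpl. unfold Wr. rewrite sumW. destruct (Goodc c).
 - destruct (Nat.eqb_spec r 0). contradiction. simpl. rewrite Rabs_mult.
   pose proof (mobius_abs c). pose proof (Tn_abs c r). pose proof (Rabs_pos (mobius c)). pose proof (Rabs_pos (Tn c r)). nra.
 - simpl. rewrite Rabs_R0; lra. Qed.

Lemma HH_nonneg : 0 <= HH. Proof. unfold HH; lra. Qed.
Lemma Y_nonneg : 0 <= Y. Proof. unfold Y. apply Rdiv_le_0_compat. apply HH_nonneg. pose proof Hqr; lra. Qed.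

Lemma beta_nonneg C0 c : 0 <= beta C0 c.
Proof. unfold beta. destruct (_ && _)%bool eqn:E; [|lra]. apply andb_true_iff in E as [_ E].
 destruct (Good_t c E) as [Hc _]. assert (0 < INR c ^ 3) by (apply pow_lt, (lt_INR 0); lia).
 pose proof Bc_nonneg. pose proof (Gc_nonneg c). pose proof (sqrt_pos Y). pose proof (sqrt_pos HH).
 assert (0 <= sqrt Y / INR c ^ 3) by (apply Rdiv_le_0_compat; lra).
 assert (0 <= sqrt HH / INR c ^ 3) by (apply Rdiv_le_0_compat; lra).
 apply Rmult_le_pos. apply Rmult_le_pos. nra. lra. lra. Qed.

Lemma v_sq C0 c : rs (fun r => (v C0 c r) ^ 2) q <= (beta C0 c) ^ 2.
Proof. unfold v, beta. destruct ((C0 <? c)%nat && Goodc c)%bool eqn:E.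
 2: { transitivity (rs (fun _ => 0) q). right. apply rs_ext. intros; simpl; ring. rewrite rs_zero. simpl; nra. }
 apply andb_true_iff in E as [_ E]. destruct (Good_t c E) as [Hc _].
 assert (Hc3 : 0 < INR c ^ 3) by (apply pow_lt, (lt_INR 0); lia).
 pose proof Bc_nonneg. pose proof (Gc_nonneg c).
 assert (Hc6 : 0 < INR c ^ 6) by (apply pow_lt, (lt_INR 0); lia).
 assert (HY6 : 0 <= Y / INR c ^ 6) by (apply Rdiv_le_0_compat; [apply Y_nonneg|lra]).
 set (mx := Bc * Gc c * (Y / INR c ^ 6 + 1)).
 assert (Hmx : 0 <= mx) by (unfold mx; apply Rmult_le_pos; [apply Rmult_le_pos|]; lra).
 assert (Step : rs (fun r => (if negb (r =? 0)%nat then u c r else 0) ^ 2) q <= mx * (Bc * Gc c * (HH / INR c ^ 6 + 1))).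
 { apply Rle_trans with (rs (fun r => mx * u c r) q).
   - apply rs_le. intros r _. destruct (Nat.eqb_spec r 0); simpl.
     + pose proof (u_nonneg c r). nra.
     + pose proof (u_le_mx c r Hc n) as Hu. fold mx in Hu. pose proof (u_nonneg c r). nra.
   - rewrite rs_scal. apply Rmult_le_compat_l. auto. apply sum_u; auto. }
 simpl andb. eapply Rle_trans. apply Step. unfold mx.
 set (sY := sqrt Y). set (sH := sqrt HH). set (c3 := INR c ^ 3).
 assert (EY : Y / INR c ^ 6 = (sY / c3) ^ 2). { unfold sY, c3. unfold Rdiv. rewrite Rpow_mult_distr, pow2_sqrt by apply Y_nonneg. 
   rewrite pow_inv. f_equal. f_equal. ring. }
 assert (EH : HH / INR c ^ 6 = (sH / c3) ^ 2). { unfold sH, c3. unfold Rdiv. rewrite Rpow_mult_distr, pow2_sqrt by apply HH_nonneg. 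
   rewrite pow_inv. f_equal. f_equal. ring. }
 rewrite EY, EH. assert (0 <= sY / c3) by (apply Rdiv_le_0_compat; [apply sqrt_pos|unfold c3; lra]).
 assert (0 <= sH / c3) by (apply Rdiv_le_0_compat; [apply sqrt_pos|unfold c3; lra]).
 set (p1 := sY / c3) in *. set (p2 := sH / c3) in *. set (BG := Bc * Gc c) in *.
 assert (0 <= BG) by (unfold BG; nra).
 assert (p1 ^ 2 + 1 <= (p1 + 1) ^ 2) by nra. assert (p2 ^ 2 + 1 <= (p2 + 1) ^ 2) by nra.
 assert ((p1 ^ 2 + 1) * (p2 ^ 2 + 1) <= (p1 + 1) ^ 2 * (p2 + 1) ^ 2).
 { apply Rmult_le_compat; nra. }
 replace (BG * (p1 ^ 2 + 1) * (BG * (p2 ^ 2 + 1))) with (BG ^ 2 * ((p1 ^ 2 + 1) * (p2 ^ 2 + 1))) by ring.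
 replace ((BG * (p1 + 1) * (p2 + 1)) ^ 2) with (BG ^ 2 * ((p1 + 1) ^ 2 * (p2 + 1) ^ 2)) by ring.
 apply Rmult_le_compat_l. nra. auto. Qed.

Lemma P2_sq C0 : rs (fun r => if (r =? 0)%nat then 0 else (P2 C0 r) ^ 2) q <= (rs (beta C0) (S K)) ^ 2.
Proof. eapply Rle_trans. 2: { apply minkowski. apply beta_nonneg. intros; apply v_sq. }
 apply rs_le. intros r _. destruct (Nat.eqb_spec r 0). apply pow2_ge_0.
 pose proof (P2_bound C0 r n). assert (0 <= rs (fun c => v C0 c r) (S K)).
 { apply rs_nonneg. intros c _. unfold v. destruct (_ && _)%bool. apply u_nonneg. lra. }
 pose proof (Rabs_pos (P2 C0 r)). rewrite <- (pow2_abs (P2 C0 r)). apply pow_incr. lra. Qed.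

Lemma beta_sum C0 : INR C0 ^ 6 <= Rmin z Y -> Rmin z Y < INR (S C0) ^ 6 ->
  rs (beta C0) (S K) <= Bc / sqrt x * (4 * sqrt HH * tt + tt ^ 4).
Proof. intros HC1 HC2. pose proof Bc_nonneg. assert (Hsx : 0 < sqrt x) by (apply sqrt_lt_R0; auto).
 pose proof tt_pos. pose proof (sqrt_pos HH). pose proof (sqrt_pos Y).
 assert (RHS0 : 0 <= Bc / sqrt x * (4 * sqrt HH * tt + tt ^ 4)).
 { apply Rmult_le_pos. apply Rdiv_le_0_compat; lra. assert (0 <= tt ^ 4) by (apply pow_le; lra). nra. }
 destruct (Classical_Prop.classic (exists c, ((C0 <? c)%nat && Goodc c)%bool = true)) as [[c0 Hc0]|NE].
 2: { transitivity (rs (fun _ => 0) (S K)). right. apply rs_ext. intros c _. unfold beta.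
      destruct ((C0 <? c)%nat && Goodc c)%bool eqn:E; auto. exfalso; apply NE; eauto. rewrite rs_zero; auto. }
 apply andb_true_iff in Hc0 as [Hc01 Hc02]. apply Nat.ltb_lt in Hc01. destruct (Good_t c0 Hc02) as [_ Hct].
 assert (HS : INR (S C0) <= tt). { apply Rle_trans with (INR c0); auto. apply le_INR; lia. }
 assert (HSz : INR (S C0) ^ 6 <= z). { rewrite <- tt_pow6. apply pow_incr. split; auto. apply pos_INR. }
 assert (HYS : Y < INR (S C0) ^ 6). { unfold Rmin in HC2. destruct (Rle_dec z Y); lra. }
 assert (HS1 : 1 <= INR (S C0)) by (apply (le_INR 1); lia).
 assert (HsY : sqrt Y < INR (S C0) ^ 3).
 { rewrite <- (sqrt_pow2 (INR (S C0) ^ 3)) by (apply pow_le; lra). apply sqrt_lt_1_alt. split. apply Y_nonneg.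
   replace ((INR (S C0) ^ 3) ^ 2) with (INR (S C0) ^ 6) by ring. auto. }
 assert (HYH : sqrt Y <= sqrt HH).
 { apply sqrt_le_1_alt. unfold Y. pose proof Hqr. pose proof HH_nonneg. apply Rmult_le_reg_r with (INR q). lra.
   unfold Rdiv. rewrite Rmult_assoc, Rinv_l by lra. nra. }
 set (sY := sqrt Y) in *. set (sH := sqrt HH) in *.
 set (T1 := fun c => if (S C0 <=? c)%nat then / (INR c ^ 3) else 0).
 set (T2 := fun c => if ((1 <=? c)%nat && (if Rle_dec (INR c) tt then true else false))%bool then 1 else 0).
 set (T3 := fun c => if ((1 <=? c)%nat && (if Rle_dec (INR c) tt then true else false))%bool then INR c ^ 3 else 0).
 assert (T1nn : forall c, 0 <= T1 c).
 { intros c. unfold T1. destruct (Nat.leb_spec (S C0) c); [|lra]. apply Rlt_le, Rinv_0_lt_compat, pow_lt, (lt_INR 0); lia. }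
 assert (T2nn : forall c, 0 <= T2 c). { intros c. unfold T2. destruct (_ && _)%bool; lra. }
 assert (T3nn : forall c, 0 <= T3 c). { intros c. unfold T3. destruct (_ && _)%bool; [apply pow_le, pos_INR|lra]. }
 assert (Hterm : forall c, beta C0 c <= Bc / sqrt x * (sY * sH * T1 c + (sY + sH) * T2 c + T3 c)).
 { intros c. unfold beta, T1, T2, T3. destruct ((C0 <? c)%nat && Goodc c)%bool eqn:E.
   - apply andb_true_iff in E as [E1 E2]. apply Nat.ltb_lt in E1. destruct (Good_t c E2) as [Hc Hct'].
     destruct (Nat.leb_spec (S C0) c); [|lia]. destruct (Nat.leb_spec 1 c); [|lia].
     destruct (Rle_dec (INR c) tt); [|lra]. simpl.
     assert (0 < INR c ^ 3) by (apply pow_lt, (lt_INR 0); lia). assert (INR c <> 0) by (apply Rgt_not_eq, (lt_INR 0); lia).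
     assert (sqrt x <> 0) by lra. unfold Gc, sY, sH. right. field. auto.
   - apply Rmult_le_pos. apply Rdiv_le_0_compat; lra.
     fold (T1 c) (T2 c) (T3 c).
     apply Rplus_le_le_0_compat. apply Rplus_le_le_0_compat.
     apply Rmult_le_pos. apply Rmult_le_pos; lra. apply T1nn. apply Rmult_le_pos. lra. apply T2nn. apply T3nn. }
 eapply Rle_trans. apply rs_le. intros c _. apply Hterm.
 rewrite rs_scal, !rs_plus, !rs_scal. apply Rmult_le_compat_l. apply Rdiv_le_0_compat; lra.
 assert (E1 : rs T1 (S K) <= 2 / INR (S C0) ^ 2) by (apply tele_cube; lia).
 assert (E2 : rs T2 (S K) <= tt).
 { unfold T2. assert (C : rs (fun n => if ((1 <=? n)%nat && (if Rle_dec (INR n) tt then true else false))%bool then 1 else 0) (S K) <= (tt - 1) / INR 1 + 1).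
   { apply count_le. lia. change (INR 1) with 1. replace ((tt-1)/1 + 1) with tt by field. lra.
     - intros n Hn. apply andb_true_iff in Hn as [Hn1 Hn]. destruct (Rle_dec (INR n) tt); [|discriminate].
       apply Nat.leb_le in Hn1. split; auto. apply (le_INR 1); auto.
     - intros; lia. }
   change (INR 1) with 1 in C. replace ((tt - 1) / 1 + 1) with tt in C by field. auto. }
 assert (E3 : rs T3 (S K) <= tt ^ 4) by (apply cube_sum; lra).
 assert (E1' : sY * sH * rs T1 (S K) <= 2 * sH * tt).
 { assert (0 <= sY * sH) by nra. eapply Rle_trans. apply Rmult_le_compat_l. auto. apply E1.
   set (m := INR (S C0)) in *. assert (sY / m ^ 2 <= m).
   { apply Rmult_le_reg_r with (m ^ 2). apply pow_lt; lra. unfold Rdiv. rewrite Rmult_assoc, Rinv_l.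
     replace (m * m ^ 2) with (m ^ 3) by ring. lra. apply pow_nonzero; lra. }
   replace (sY * sH * (2 / m ^ 2)) with (2 * sH * (sY / m ^ 2)) by (field; lra). nra. }
 assert (0 <= rs T2 (S K)). { apply rs_nonneg. intros. unfold T2. destruct (_ && _)%bool; lra. }
 nra. Qed.

Definition aa (C0 r : nat) : R := if (r =? 0)%nat then 0 else Ar r - Mm C0.

Lemma V_bound C0 : INR C0 ^ 6 <= Rmin z Y -> Rmin z Y < INR (S C0) ^ 6 ->
  rs (fun r => (aa C0 r) ^ 2) q <= 140 * Bc ^ 2 * tt ^ 2.
Proof. intros HC1 HC2. pose proof Bc_nonneg. assert (Hsx : 0 < sqrt x) by (apply sqrt_lt_R0; auto).
 pose proof tt_pos. pose proof Hqr. pose proof HH_nonneg.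
 assert (Step1 : rs (fun r => (aa C0 r) ^ 2) q <=
   2 * rs (fun r => if (r =? 0)%nat then 0 else (P1 C0 r) ^ 2) q + 2 * rs (fun r => if (r =? 0)%nat then 0 else (P2 C0 r) ^ 2) q).
 { rewrite <- !rs_scal, <- rs_plus. apply rs_le. intros r _. unfold aa. destruct (r =? 0)%nat. lra.
   rewrite Ar_split. pose proof (pow2_ge_0 (P1 C0 r - P2 C0 r)). nra. }
 assert (B1 : rs (fun r => if (r =? 0)%nat then 0 else (P1 C0 r) ^ 2) q <= INR q * (Bc / sqrt x * INR C0 ^ 4) ^ 2).
 { rewrite <- rs_const. apply rs_le. intros r Hr. destruct (Nat.eqb_spec r 0). apply pow2_ge_0.
   pose proof (P1_bound C0 r n Hr). rewrite <- (pow2_abs (P1 C0 r)). apply pow_incr. split; auto. apply Rabs_pos. }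
 assert (B2 := P2_sq C0). pose proof (beta_sum C0 HC1 HC2).
 assert (0 <= rs (beta C0) (S K)) by (apply rs_nonneg; intros; apply beta_nonneg).
 assert (B2' : rs (beta C0) (S K) ^ 2 <= (Bc / sqrt x * (4 * sqrt HH * tt + tt ^ 4)) ^ 2) by (apply pow_incr; lra).
 assert (Hx2 : sqrt x ^ 2 = x) by (apply pow2_sqrt; lra).
 assert (HH2 : sqrt HH ^ 2 = HH) by (apply pow2_sqrt; lra).
 assert (HHx : HH <= 2 * x) by (unfold HH; lra).
 assert (Htt8 : tt ^ 6 <= 2 * x) by (rewrite tt_pow6; lra).
 assert (HC0t : INR C0 <= tt). { apply (pow_le_inv _ _ 6). apply pos_INR. lra. lia. rewrite tt_pow6.
   pose proof (Rmin_l z Y). lra. }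
 assert (HqC : INR q * INR C0 ^ 6 <= HH).
 { pose proof (Rmin_r z Y). unfold Y in *. apply Rmult_le_reg_r with (/ INR q). apply Rinv_0_lt_compat; lra.
   replace (INR q * INR C0 ^ 6 * / INR q) with (INR C0 ^ 6) by (field; lra). unfold Rdiv in *. lra. }
 assert (P1b : INR q * (Bc / sqrt x * INR C0 ^ 4) ^ 2 <= 2 * Bc ^ 2 * tt ^ 2).
 { replace (INR q * (Bc / sqrt x * INR C0 ^ 4) ^ 2) with (Bc ^ 2 / (sqrt x ^ 2) * ((INR q * INR C0 ^ 6) * INR C0 ^ 2))
     by (field; lra). rewrite Hx2.
   assert (0 <= INR C0 ^ 2) by apply pow2_ge_0. assert (INR C0 ^ 2 <= tt ^ 2) by (apply pow_incr; split; [apply pos_INR|lra]).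
   assert (INR q * INR C0 ^ 6 * INR C0 ^ 2 <= 2 * x * tt ^ 2).
   { assert (0 <= INR q * INR C0 ^ 6) by (apply Rmult_le_pos; [lra|apply pow_le, pos_INR]). nra. }
   assert (0 <= Bc ^ 2 / x) by (apply Rdiv_le_0_compat; [apply pow2_ge_0|lra]).
   apply Rle_trans with (Bc ^ 2 / x * (2 * x * tt ^ 2)). apply Rmult_le_compat_l; auto.
   right. field. lra. }
 assert (P2b : (Bc / sqrt x * (4 * sqrt HH * tt + tt ^ 4)) ^ 2 <= 68 * Bc ^ 2 * tt ^ 2).
 { replace ((Bc / sqrt x * (4 * sqrt HH * tt + tt ^ 4)) ^ 2) with (Bc ^ 2 / (sqrt x ^ 2) * (4 * sqrt HH * tt + tt ^ 4) ^ 2)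
     by (field; lra). rewrite Hx2.
   assert ((4 * sqrt HH * tt + tt ^ 4) ^ 2 <= 2 * (16 * HH * tt ^ 2 + tt ^ 6 * tt ^ 2)).
   { set (sh := sqrt HH) in *. rewrite <- HH2. pose proof (pow2_ge_0 (4 * sh * tt - tt ^ 4)).
     assert (2 * (16 * sh ^ 2 * tt ^ 2 + tt ^ 6 * tt ^ 2) - (4 * sh * tt + tt ^ 4) ^ 2 = (4 * sh * tt - tt ^ 4) ^ 2) by ring.
     lra. }
   assert (0 <= tt ^ 2) by apply pow2_ge_0.
   assert (2 * (16 * HH * tt ^ 2 + tt ^ 6 * tt ^ 2) <= 68 * x * tt ^ 2) by nra.
   assert (0 <= Bc ^ 2 / x) by (apply Rdiv_le_0_compat; [apply pow2_ge_0|lra]).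
   apply Rle_trans with (Bc ^ 2 / x * (68 * x * tt ^ 2)). apply Rmult_le_compat_l; auto. lra.
   right. field. lra. }
 lra. Qed.

Section ChiPart.
Variable chi : nat -> C.
Hypothesis Hchi : dirichlet_char q chi.

Lemma term_eq c n : (if Pc c n then Cmult (Cmult (Cmult (RtoC (mobius c)) (chi n)) (pow_n (chi c) 6)) (RtoC (f (INR n))) else RtoC 0)
  = cs (fun r => if (rho c n =? r)%nat then Cmult (chi r) (RtoC (W c n)) else RtoC 0) q.
Proof. rewrite (cs_indic q (rho c n) (fun r => Cmult (chi r) (RtoC (W c n)))) by apply rho_lt.
 unfold W, rho. rewrite <- (chi_mod q Hq2 chi Hchi). rewrite (chi_mult q chi Hchi), (chi_pow q chi Hchi).
 destruct (Pc c n). rewrite RtoC_mult. ring. ring. Qed.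

Lemma inner_res : inner_sum K z a b lc rc chi = cs (fun r => Cmult (chi r) (RtoC (Ar r))) q.
Proof. unfold inner_sum. rewrite sum_n_cs.
 transitivity (cs (fun c => cs (fun r => cs (fun n => if (rho c n =? r)%nat then Cmult (chi r) (RtoC (W c n)) else RtoC 0) (S K)) q) (S K)).
 - apply cs_ext. intros c _. rewrite sum_n_cs. rewrite <- cs_exchange. apply cs_ext. intros n _. apply term_eq.
 - rewrite cs_exchange. apply cs_ext. intros r _. unfold Ar, Wr.
   rewrite <- cs_RtoC, <- cs_scal. apply cs_ext. intros c _. rewrite <- cs_RtoC, <- cs_scal. apply cs_ext. intros n _.
   destruct (rho c n =? r)%nat. auto. ring. Qed.

Lemma res_aa C0 : ~ (forall n, chi n = principal_char q n) ->
  cs (fun r => Cmult (chi r) (RtoC (Ar r))) q = cs (fun r => Cmult (chi r) (RtoC (aa C0 r))) q.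
Proof. intros Hnp.
 transitivity (cs (fun r => Cplus (Cmult (chi r) (RtoC (aa C0 r))) (Cmult (RtoC (Mm C0)) (chi r))) q).
 - apply cs_ext. intros r _. unfold aa. destruct (Nat.eqb_spec r 0).
   + subst. rewrite (chi_zero q Hq2 Hqp chi Hchi). ring.
   + rewrite RtoC_minus. ring.
 - rewrite cs_plus, cs_scal, (nonprinc_sum q Hq2 Hqp chi Hchi Hnp). ring. Qed.
End ChiPart.
End Main.

Module NTm.
From mathcomp Require Import ssreflect ssrfun ssrbool eqtype ssrnat div prime fintype.
From mathcomp Require Import cyclic.

Local Open Scope nat_scope.
Lemma expn_pow m n : expn m n = Nat.pow m n.
Proof. elim: n => [|n IH] //=. by rewrite expnS IH multE. Qed.

Lemma divide_dvdn d m : Nat.divide d m <-> is_true (d %| m).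
Proof. split.
- move=> [k ->]. apply/dvdnP. exists k. by rewrite multE.
- move/dvdnP=> [k ->]. exists k. by rewrite multE. Qed.

Lemma prime_nat q : prime.prime q = true ->
  (2 <= q)%coq_nat /\ forall d, Nat.divide d q -> d = 1 \/ d = q.
Proof. move=> Hq. have Hq' : is_true (prime q) by []. case/primeP: Hq' => H1 H2.
split. by apply/leP.
move=> d /divide_dvdn /H2 /orP [/eqP ->|/eqP ->]; by [left|right]. Qed.

Lemma euler_nat q n : prime.prime q = true -> ~ Nat.divide q n ->
  exists k, Nat.pow n (Nat.sub q 1) = Nat.add 1 (Nat.mul k q).
Proof. move=> Hq Hn.
have cop : coprime n q. rewrite coprime_sym prime_coprime //. apply/negP => /divide_dvdn. done.
have := Euler_exp_totient cop. rewrite totient_prime // => E.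
have n0 : 0 < n. case: n Hn cop E => //= _. rewrite /coprime gcd0n. move=> /eqP Eq. subst. done.
have h1 : 1 <= n ^ q.-1 by rewrite expn_gt0 n0.
have : (n ^ q.-1 == 1 %[mod q]) by apply/eqP.
rewrite eqn_mod_dvd // => /dvdnP [k Hk]. exists k.
have -> : Nat.sub q 1 = q.-1 by lia.
move/leP: h1 => h1. move: Hk h1. rewrite -multE -minusE expn_pow. lia. Qed.

Lemma phi_prime q : prime.prime q = true -> prime.totient q = Nat.sub q 1.
Proof. move=> Hq. rewrite totient_prime //. lia. Qed.
End NTm.



Lemma C0_exists m : 0 <= m -> exists C0 : nat, INR C0 ^ 6 <= m /\ m < INR (S C0) ^ 6.
Proof. intros Hm.
 assert (G : forall N : nat, m < INR N ^ 6 -> exists C0 : nat, INR C0 ^ 6 <= m /\ m < INR (S C0) ^ 6).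
 { induction N; intros H. simpl in H. lra.
   destruct (Rlt_dec m (INR N ^ 6)). apply IHN; auto. exists N. split; auto. lra. }
 destruct (archimed m) as [H1 _]. apply (G (Z.to_nat (up m))).
 assert (0 < up m)%Z. { apply lt_IZR. lra. }
 rewrite INR_IZR_INZ, Z2Nat.id by lia.
 assert (1 <= IZR (up m)) by (apply IZR_le; lia).
 assert (IZR (up m) <= IZR (up m) ^ 6).
 { replace (IZR (up m)) with (IZR (up m) ^ 1) at 1 by ring. apply Rle_pow; auto. lia. }
 lra. Qed.

Lemma FOP_impl (A : Type) (R1 R2 : A -> A -> Prop) L :
  ForallOrdPairs R1 L -> (forall g h, In g L -> In h L -> R1 g h -> R2 g h) -> ForallOrdPairs R2 L.
Proof. induction 1; intros H'; constructor.
 - apply Forall_forall. intros y Hy. rewrite Forall_forall in H. apply H'; simpl; auto.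
 - apply IHForallOrdPairs. intros g h Hg Hh. apply H'; simpl; auto. Qed.

Lemma char_sum_bound x z a b lc rc q K L C0 :
  0 < x -> prime.prime q = true -> 0 < z -> z <= 2 * x -> x <= a -> a <= b -> b <= 3 * x -> 3 * x <= INR K ->
  enum_nonprincipal q L ->
  char_sum q L K z a b lc rc <= rs (fun r => (aa z a b lc rc q K C0 r) ^ 2) q.
Proof. intros Hx Hp Hz Hz2 Ha Hab Hb HK [HL1 HL2].
 destruct (NTm.prime_nat q Hp) as [Hq2 Hqp].
 assert (Heul : forall n, ~ Nat.divide q n -> exists k, (n ^ (q - 1) = 1 + k * q)%nat) by (intros; apply NTm.euler_nat; auto).
 unfold char_sum. unfold phi. rewrite (NTm.phi_prime q Hp).
 assert (HN : 0 < INR (q - 1)) by (apply (lt_INR 0); lia).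
 set (av := fun r => RtoC (aa z a b lc rc q K C0 r)).
 assert (E : fold_right (fun chi acc => Cmod (inner_sum K z a b lc rc chi) ^ 2 + acc) 0 L =
             fold_right (fun chi acc => Cmod (ip q av chi) ^ 2 + acc) 0 L).
 { apply fold_ext_R. apply Forall_forall. intros chi Hin. apply HL2 in Hin as [Hc Hnp].
   rewrite (inner_res z a b lc rc q K Hq2 chi Hc), (res_aa z a b lc rc q K Hq2 Hqp chi Hc C0 Hnp).
   f_equal. rewrite <- Cmod_conj. f_equal. unfold ip. rewrite cs_conj. apply cs_ext. intros i _.
   unfold av. apply injective_projections; simpl; ring. }
 rewrite E.
 assert (Bs := bessel q (INR (q - 1)) HN L).
 assert (H1 : ForallOrdPairs (fun g h => ip q g h = RtoC 0) L).
 { apply (FOP_impl _ _ _ L HL1). intros g h Hg Hh Hgh. apply HL2 in Hg as [Hg _]. apply HL2 in Hh as [Hh _].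
   apply orth; auto. }
 assert (H2 : List.Forall (fun g => ip q g g = RtoC (INR (q - 1))) L).
 { apply Forall_forall. intros g Hg. apply HL2 in Hg as [Hg _]. apply self_ip; auto. }
 specialize (Bs H1 H2 av).
 assert (E2 : fst (ip q av av) = rs (fun r => (aa z a b lc rc q K C0 r) ^ 2) q).
 { unfold ip. rewrite cs_re. apply rs_ext. intros i _. unfold av. simpl. ring. }
 rewrite E2 in Bs.
 apply Rmult_le_reg_l with (INR (q - 1)). auto. rewrite <- Rmult_assoc, Rinv_r by lra. lra. Qed.

Theorem mainTheorem9 :
  forall eps : R, 0 < eps ->
  exists Ceps : R, 0 < Ceps /\
  forall (x : R) (q : nat) (z : R) (a b : R) (lc rc : bool)
         (L : list (nat -> C)) (K : nat),
    0 < x ->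
    prime.prime q = true ->
    INR q <= Rpower x (1 - eps) ->
    0 < z -> z <= 2 * x ->
    x <= a -> a <= b -> b <= 3 * x ->
    3 * x <= INR K ->
    enum_nonprincipal q L ->
    char_sum q L K z a b lc rc
      <= Ceps * (rpow z (1/3) + rpow (b - a) (1/6) * Rpower (INR q) (5/6)) * ln x ^ 6.
Proof.
 intros eps He.
 assert (Hl2 : 0 < ln 2). { rewrite <- ln_1. apply ln_increasing; lra. }
 set (dl := ln 2 / (1 + eps)).
 assert (Hdl : 0 < dl) by (unfold dl; apply Rdiv_lt_0_compat; lra).
 assert (Hdl6 : 0 < dl ^ 6) by (apply pow_lt; auto).
 exists ((140 * Bc ^ 2 + 1) / dl ^ 6). split.
 { apply Rdiv_lt_0_compat; auto. pose proof (pow2_ge_0 Bc). lra. }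
 intros x q z a b lc rc L K Hx Hp Hqx Hz Hz2 Ha Hab Hb HK HL.
 destruct (NTm.prime_nat q Hp) as [Hq2 Hqp].
 assert (HYn : 0 <= Rmin z (Y a b q)).
 { unfold Rmin. destruct (Rle_dec z (Y a b q)). lra. unfold Y, HH. apply Rdiv_le_0_compat. lra.
   apply (lt_INR 0); lia. }
 destruct (C0_exists _ HYn) as [C0 [HC1 HC2]].
 eapply Rle_trans. apply (char_sum_bound x z a b lc rc q K L C0); auto.
 eapply Rle_trans. apply (V_bound x z a b lc rc q K Hx Hq2 Hqp Hz Hz2 Ha Hab Hb HK C0 HC1 HC2).
 assert (Ett : tt z ^ 2 = rpow z (1/3)).
 { unfold rpow. destruct (Rlt_dec 0 z); [|lra]. unfold tt.
   rewrite <- Rpower_pow by apply exp_pos. rewrite Rpower_mult. f_equal. simpl. field. }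
 assert (HS2 : 0 <= rpow (b - a) (1/6) * Rpower (INR q) (5/6)).
 { apply Rmult_le_pos. unfold rpow. destruct (Rlt_dec 0 (b - a)). left; apply exp_pos. lra. left; apply exp_pos. }
 assert (Hlog : dl <= Rabs (ln x)).
 { assert (H2q : 2 <= INR q) by (apply (le_INR 2); auto).
   assert (Hl : ln 2 <= (1 - eps) * ln x).
   { unfold Rpower in Hqx. rewrite <- (ln_exp ((1 - eps) * ln x)). apply ln_le. lra. lra. }
   assert (ln 2 <= Rabs (1 - eps) * Rabs (ln x)). { rewrite <- Rabs_mult. eapply Rle_trans. apply Hl. apply Rle_abs. }
   assert (Rabs (1 - eps) <= 1 + eps). { apply Rabs_le. lra. }
   unfold dl. apply Rmult_le_reg_r with (1 + eps). lra. unfold Rdiv. rewrite Rmult_assoc, Rinv_l by lra.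
   pose proof (Rabs_pos (ln x)). pose proof (Rabs_pos (1 - eps)). nra. }
 assert (Hl6 : dl ^ 6 <= ln x ^ 6).
 { replace (ln x ^ 6) with (Rabs (ln x) ^ 6). apply pow_incr. lra.
   replace 6%nat with (2 * 3)%nat by reflexivity. rewrite !pow_mult, pow2_abs. auto. }
 rewrite <- Ett. set (T := tt z ^ 2). assert (0 <= T) by apply pow2_ge_0.
 set (S2 := rpow (b - a) (1/6) * Rpower (INR q) (5/6)) in *.
 set (Cc := (140 * Bc ^ 2 + 1) / dl ^ 6).
 assert (ECc : Cc * dl ^ 6 = 140 * Bc ^ 2 + 1) by (unfold Cc; field; lra).
 assert (0 < Cc) by (unfold Cc; apply Rdiv_lt_0_compat; [pose proof (pow2_ge_0 Bc); lra|auto]).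
 assert (Cc * T * dl ^ 6 <= Cc * (T + S2) * ln x ^ 6).
 { apply Rmult_le_compat. nra. lra. nra. auto. }
 assert (Cc * T * dl ^ 6 = (140 * Bc ^ 2 + 1) * T) by (rewrite <- ECc; ring).
 nra. Qed.
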